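(* Let $X\ge y\ge2$. Let $\boldsymbol L$ be a primitive integral system of $k$ affine linear forms in $l$ variables, and let $\boldsymbol f=(f_1,\dots,f_k)$ be a vector of 1-bounded multiplicative functions such that $f_j(p^\mu)=1$ for every prime power $p^\mu\le y$ and every $j$. Then, as $y\to\infty$, $$\prod_{y<p\le X}M_p(\boldsymbol f,\boldsymbol L)=\left(1+O_k\Big(\frac1{\log y}\Big)\right)\left(\prod_{1\le j\le k}\mathfrak P(f_j;X)+O\big(y^{-1+o(1)}\big)\right).$$
   Context: 1-bounded means values in the closed unit disc. An integral affine linear form is $L(\boldsymbol n)=\alpha_0+\sum_{r=1}^l\alpha_rn_r$ with $(\alpha_0,\dots,\alpha_l)\in\mathbb{N}_0^{l+1}$; a system $(L_1,\dots,L_k)$ is primitive if for each $j$ the gcd of the non-constant coefficients of $L_j$ is $1$ and the forms are pairwise linearly independent. For multiplicative $f$ and prime $p$, $f_p$ agrees with $f$ on powers of $p$ and equals $1$ on powers of other primes; $M_p(\boldsymbol f,\boldsymbol L)=\lim_{x\to\infty}x^{-l}\sum_{\boldsymbol n\in([1,x]\cap\mathbb{N})^l}\prod_jf_{j,p}(L_j(\boldsymbol n))$. $\mathfrak P(f;X)=\prod_{p\le X}(1-\frac1p)(1+\sum_{k\ge1}\frac{f(p^k)}{p^k})$. *)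

(* Defs.v *)
From Stdlib Require Import Reals ZArith Znumtheory List Lia Bool.
From Coquelicot Require Import Coquelicot.
Open Scope R_scope.

Definition csum (s : list nat) (F : nat -> C) : C :=
  fold_right (fun i acc => Cplus (F i) acc) (RtoC 0) s.
Definition cprod (s : list nat) (F : nat -> C) : C :=
  fold_right (fun i acc => Cmult (F i) acc) (RtoC 1) s.

Definition Clim_pinfty (g : R -> C) : C :=
  (real (Lim (fun x => fst (g x)) p_infty), real (Lim (fun x => snd (g x)) p_infty)).
Definition CSeries (a : nat -> C) : C :=
  (Series (fun n => fst (a n)), Series (fun n => snd (a n))).

Definition is_prime_nat (p : nat) : Prop := prime (Z.of_nat p).

(* p-adic valuation of n (0 if n = 0 or p <= 1) *)
Fixpoint vp_aux (p fuel n : nat) : nat :=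
  match fuel with
  | O => O
  | S fu => if andb (andb (Nat.ltb 1 p) (negb (Nat.eqb n 0))) (Nat.eqb (n mod p) 0)
            then S (vp_aux p fu (n / p)) else O
  end.
Definition vp (p n : nat) : nat := vp_aux p n n.

Definition one_bounded (f : nat -> C) : Prop := forall n, (1 <= n)%nat -> Cmod (f n) <= 1.
Definition multiplicative (f : nat -> C) : Prop :=
  f 1%nat = RtoC 1 /\
  forall m n, (1 <= m)%nat -> (1 <= n)%nat -> Nat.gcd m n = 1%nat ->
    f (m * n)%nat = Cmult (f m) (f n).

(* f_p : agrees with f on powers of p, equals 1 on powers of other primes *)
Definition floc (f : nat -> C) (p n : nat) : C := f (p ^ vp p n)%nat.

(* A system of k integral affine linear forms in l variables is encoded by
   a : nat -> nat -> nat, where a j 0 = alpha_0 of L_j and a j r (1<=r<=l)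
   is the coefficient of n_r, for j < k.  A point n in N^l is a list of
   length l, n_r = nth (r-1) n 0. *)
Definition Leval (l : nat) (a : nat -> nat -> nat) (j : nat) (n : list nat) : nat :=
  (a j 0%nat + fold_right Nat.add 0%nat
      (map (fun r => a j r * nth (r - 1) n 0%nat) (seq 1 l)))%nat.

Definition primitive_system (k l : nat) (a : nat -> nat -> nat) : Prop :=
  (forall j, (j < k)%nat ->
     fold_right Nat.gcd 0%nat (map (a j) (seq 1 l)) = 1%nat) /\
  (forall j j', (j < k)%nat -> (j' < k)%nat -> j <> j' ->
     forall c d : R,
       (forall r, (r <= l)%nat -> c * INR (a j r) + d * INR (a j' r) = 0) ->
       c = 0 /\ d = 0).

Fixpoint box_sum (l N : nat) (F : list nat -> C) : C :=
  match l with
  | O => F nil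
  | S l' => csum (seq 1 N) (fun m => box_sum l' N (fun t => F (m :: t)))
  end.

Definition Mp (k l : nat) (f : nat -> nat -> C) (a : nat -> nat -> nat) (p : nat) : C :=
  Clim_pinfty (fun x =>
    Cmult (RtoC (/ (x ^ l)))
      (box_sum l (Z.to_nat (Int_part x))
         (fun n => cprod (seq 0 k) (fun j => floc (f j) p (Leval l a j n))))).

Definition prod_primes (lo hi : R) (F : nat -> C) : C :=
  cprod (seq 0 (Z.to_nat (up hi)))
    (fun p => if prime_dec (Z.of_nat p) then
                if Rlt_dec lo (INR p) then
                  if Rle_dec (INR p) hi then F p else RtoC 1
                else RtoC 1
              else RtoC 1).

Definition Pfrak (f : nat -> C) (X : R) : C :=
  prod_primes 0 X (fun p =>
    Cmult (RtoC (1 - / INR p))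
      (Cplus (RtoC 1)
        (CSeries (fun m => Cmult (f (p ^ (S m))%nat) (RtoC (/ INR (p ^ (S m))%nat)))))).

(* Main.v *)
Require Import Defs.
From Stdlib Require Import Reals ZArith Znumtheory List Lia Lra Psatz Classical.
From Coquelicot Require Import Coquelicot.
Open Scope R_scope.

Definition rsum (s : list nat) (F : nat -> R) : R :=
  fold_right (fun i acc => F i + acc) 0 s.

Lemma rsum_app s t F : rsum (s ++ t) F = rsum s F + rsum t F.
Proof. induction s; simpl; [lra|]. rewrite IHs; lra. Qed.

Lemma rsum_ext s F G : (forall i, In i s -> F i = G i) -> rsum s F = rsum s G.
Proof. induction s; simpl; intros H; auto. rewrite H, IHs; auto. Qed.

Lemma rsum_le s F G : (forall i, In i s -> F i <= G i) -> rsum s F <= rsum s G.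
Proof. induction s; simpl; intros H; [lra|]. pose proof (H a (or_introl eq_refl)).
  pose proof (IHs (fun i Hi => H i (or_intror Hi))). lra. Qed.

Lemma rsum_plus s F G : rsum s (fun i => F i + G i) = rsum s F + rsum s G.
Proof. induction s; simpl; [lra|]. rewrite IHs; lra. Qed.

Lemma rsum_scal s c F : rsum s (fun i => c * F i) = c * rsum s F.
Proof. induction s; simpl; [lra|]. rewrite IHs; lra. Qed.

Lemma rsum_const s c : rsum s (fun _ => c) = INR (length s) * c.
Proof. induction s; simpl length; [simpl; lra|]. rewrite S_INR. simpl. rewrite IHs. lra. Qed.

Lemma rsum_nonneg s F : (forall i, In i s -> 0 <= F i) -> 0 <= rsum s F.
Proof. intros H. apply Rle_trans with (rsum s (fun _ => 0)).
  rewrite rsum_const; lra. apply rsum_le; auto. Qed.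

Lemma csum_ext s F G : (forall i, In i s -> F i = G i) -> csum s F = csum s G.
Proof. induction s; simpl; intros H; auto. rewrite H, IHs; auto. Qed.

Lemma csum_plus s F G : csum s (fun i => (F i + G i)%C) = (csum s F + csum s G)%C.
Proof. induction s; simpl. ring. rewrite IHs; ring. Qed.

Lemma csum_scal s c F : csum s (fun i => (c * F i)%C) = (c * csum s F)%C.
Proof. induction s; simpl. ring. rewrite IHs; ring. Qed.

Lemma csum_RtoC s F : csum s (fun i => RtoC (F i)) = RtoC (rsum s F).
Proof. induction s; simpl. auto. rewrite IHs. unfold RtoC, Cplus. simpl. f_equal; lra. Qed.

Lemma Cmod_csum s F : Cmod (csum s F) <= rsum s (fun i => Cmod (F i)).
Proof. induction s; simpl. rewrite Cmod_0; lra.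
  eapply Rle_trans. apply Cmod_triangle. lra. Qed.

Lemma cprod_ext s F G : (forall i, In i s -> F i = G i) -> cprod s F = cprod s G.
Proof. induction s; simpl; intros H; auto. rewrite H, IHs; auto. Qed.

Lemma cprod_mul s F G : cprod s (fun i => (F i * G i)%C) = (cprod s F * cprod s G)%C.
Proof. induction s; simpl. ring. rewrite IHs; ring. Qed.

Lemma cprod_one s : cprod s (fun _ => RtoC 1) = RtoC 1.
Proof. induction s; simpl; auto. rewrite IHs; ring. Qed.

Lemma cprod_app s t F : cprod (s ++ t) F = (cprod s F * cprod t F)%C.
Proof. induction s; simpl. ring. rewrite IHs; ring. Qed.

Lemma cprod_comm s t F :
  cprod s (fun i => cprod t (F i)) = cprod t (fun j => cprod s (fun i => F i j)).
Proof. induction s; simpl. rewrite cprod_one; auto.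
  rewrite IHs. rewrite <- cprod_mul. auto. Qed.

Lemma exp_small S : 0 <= S <= 1/2 -> exp S - 1 <= 2 * S.
Proof. intros H. pose proof (exp_ineq1_le (-S)). pose proof (exp_pos S).
  assert (exp S * exp (-S) = 1). { rewrite <- exp_plus. replace (S + - S) with 0 by lra. apply exp_0. }
  assert (exp S * (1 - S) <= 1) by nra. nra. Qed.

Lemma cprod_near1 s z :
  Cmod (cprod s z - 1) <= exp (rsum s (fun i => Cmod (z i - 1))) - 1.
Proof. induction s; simpl.
  - replace (1 - 1)%C with (RtoC 0) by (unfold RtoC; apply injective_projections; simpl; lra).
    rewrite Cmod_0, exp_0. lra.
  - set (P := cprod s z) in *. set (S := rsum s (fun i => Cmod (z i - 1))) in *.
    replace (z a * P - 1)%C with ((z a - 1) * P + (P - 1))%C by ring.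
    eapply Rle_trans. apply Cmod_triangle. rewrite Cmod_mult.
    assert (HP : Cmod P <= exp S).
    { replace P with ((P - 1) + 1)%C by ring. eapply Rle_trans. apply Cmod_triangle. rewrite Cmod_1. lra. }
    pose proof (exp_ineq1_le (Cmod (z a - 1))). rewrite exp_plus.
    pose proof (Cmod_ge_0 (z a - 1)). pose proof (exp_pos S). nra.
Qed.

Lemma cprod_near1_small s z :
  rsum s (fun i => Cmod (z i - 1)) <= 1/2 ->
  Cmod (cprod s z - 1) <= 2 * rsum s (fun i => Cmod (z i - 1)).
Proof. intros H. eapply Rle_trans. apply cprod_near1. apply exp_small. split; auto.
  apply rsum_nonneg. intros; apply Cmod_ge_0. Qed.

Fixpoint pairsum (s : list nat) (g : nat -> R) : R :=
  match s with nil => 0 | i :: t => g i * rsum t g + pairsum t g end.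

Lemma pairsum_nonneg s g : (forall i, 0 <= g i) -> 0 <= pairsum s g.
Proof. intros H; induction s; simpl. lra. assert (0 <= rsum s g) by (apply rsum_nonneg; auto).
  pose proof (H a). nra. Qed.

Lemma cprod_R s h : (forall i, In i s -> Cmod (h i) <= 2) ->
  Cmod (cprod s (fun i => 1 + h i) - 1 - csum s h)%C <= 3 ^ length s * pairsum s (fun i => Cmod (h i)).
Proof. induction s; simpl; intros H.
  - replace (1 - 1 - 0)%C with (RtoC 0) by (unfold RtoC; apply injective_projections; simpl; lra).
    rewrite Cmod_0; lra.
  - set (P := cprod s (fun i => 1 + h i)%C) in *. set (S := csum s h) in *.
    replace ((1 + h a) * P - 1 - (h a + S))%C with (h a * S + (1 + h a) * (P - 1 - S))%C by ring.
    eapply Rle_trans. apply Cmod_triangle. rewrite !Cmod_mult.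
    pose proof (IHs (fun i Hi => H i (or_intror Hi))) as IH.
    pose proof (H a (or_introl eq_refl)) as Ha.
    assert (C1 : Cmod (1 + h a) <= 3). { eapply Rle_trans. apply Cmod_triangle. rewrite Cmod_1. lra. }
    assert (C2 : Cmod S <= rsum s (fun i => Cmod (h i))) by apply Cmod_csum.
    assert (1 <= 3 ^ length s) by (apply pow_R1_Rle; lra).
    pose proof (Cmod_ge_0 (h a)). pose proof (Cmod_ge_0 (P - 1 - S)%C). pose proof (Cmod_ge_0 S).
    assert (0 <= pairsum s (fun i => Cmod (h i))) by (apply pairsum_nonneg; intros; apply Cmod_ge_0).
    assert (0 <= Cmod (h a) * rsum s (fun i => Cmod (h i))) by nra.
    nra.
Qed.
Fixpoint rbox (l N : nat) (F : list nat -> R) : R :=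
  match l with
  | O => F nil
  | S l' => rsum (seq 1 N) (fun m => rbox l' N (fun t => F (m :: t)))
  end.

Lemma box_sum_ext l N F G : (forall n, F n = G n) -> box_sum l N F = box_sum l N G.
Proof. revert F G; induction l; simpl; intros F G H; auto.
  apply csum_ext; intros; apply IHl; auto. Qed.

Lemma rbox_ext l N F G : (forall n, F n = G n) -> rbox l N F = rbox l N G.
Proof. revert F G; induction l; simpl; intros F G H; auto.
  apply rsum_ext; intros; apply IHl; auto. Qed.

Lemma box_sum_RtoC l N F : box_sum l N (fun n => RtoC (F n)) = RtoC (rbox l N F).
Proof. revert F; induction l; simpl; intros F; auto.
  rewrite <- csum_RtoC. apply csum_ext; intros; apply IHl. Qed.

Lemma box_sum_plus l N F G :
  box_sum l N (fun n => (F n + G n)%C) = (box_sum l N F + box_sum l N G)%C.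
Proof. revert F G; induction l; simpl; intros F G; auto.
  rewrite <- csum_plus. apply csum_ext; intros; apply IHl. Qed.

Lemma box_sum_scal l N c F :
  box_sum l N (fun n => (c * F n)%C) = (c * box_sum l N F)%C.
Proof. revert F; induction l; simpl; intros F; auto.
  rewrite <- csum_scal. apply csum_ext; intros; apply IHl. Qed.

Lemma Cmod_box l N F : Cmod (box_sum l N F) <= rbox l N (fun n => Cmod (F n)).
Proof. revert F; induction l; simpl; intros F. lra.
  eapply Rle_trans. apply Cmod_csum. apply rsum_le; intros; apply IHl. Qed.

Lemma rbox_le l N F G : (forall n, F n <= G n) -> rbox l N F <= rbox l N G.
Proof. revert F G; induction l; simpl; intros F G H; auto.
  apply rsum_le; intros; apply IHl; auto. Qed.

Lemma rbox_plus l N F G : rbox l N (fun n => F n + G n) = rbox l N F + rbox l N G.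
Proof. revert F G; induction l; simpl; intros F G; auto.
  rewrite <- rsum_plus. apply rsum_ext; intros; apply IHl. Qed.

Lemma rbox_scal l N c F : rbox l N (fun n => c * F n) = c * rbox l N F.
Proof. revert F; induction l; simpl; intros F; auto.
  rewrite <- rsum_scal. apply rsum_ext; intros; apply IHl. Qed.

Lemma rbox_const l N c : rbox l N (fun _ => c) = INR N ^ l * c.
Proof. induction l; simpl. lra.
  rewrite (rsum_ext _ _ (fun _ => INR N ^ l * c)) by auto. rewrite rsum_const, length_seq. lra. Qed.

Lemma rbox_rsum l N s G :
  rbox l N (fun n => rsum s (fun j => G j n)) = rsum s (fun j => rbox l N (G j)).
Proof. induction s; simpl. rewrite rbox_const; lra.
  rewrite rbox_plus, IHs. auto. Qed.

Lemma rbox_nonneg l N F : (forall n, 0 <= F n) -> 0 <= rbox l N F.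
Proof. intros H. apply Rle_trans with (rbox l N (fun _ => 0)). rewrite rbox_const; lra.
  apply rbox_le; auto. Qed.

Lemma rbox_near l N F c d : (forall n, Rabs (F n - c) <= d) ->
  Rabs (rbox l N F - INR N ^ l * c) <= INR N ^ l * d.
Proof. intros H.
  assert (A1: rbox l N (fun _ => c - d) <= rbox l N F).
  { apply rbox_le. intros n; specialize (H n). apply Rabs_le_between in H. lra. }
  assert (A2: rbox l N F <= rbox l N (fun _ => c + d)).
  { apply rbox_le. intros n; specialize (H n). apply Rabs_le_between in H. lra. }
  rewrite !rbox_const in A1, A2. apply Rabs_le; split; lra.
Qed.
Open Scope Z_scope.
Definition dv (q x : Z) : R := if Z.eqb (x mod q) 0 then 1%R else 0%R.

Lemma dv_spec q x : q <> 0 -> (dv q x = 1%R /\ (q | x)) \/ (dv q x = 0%R /\ ~ (q | x)).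
Proof. intros Hq. unfold dv. destruct (Z.eqb_spec (x mod q) 0).
  - left. split; auto. apply Z.mod_divide; auto.
  - right. split; auto. intros H; apply n, Z.mod_divide; auto. Qed.

Lemma dv_range q x : (0 <= dv q x <= 1)%R.
Proof. unfold dv; destruct (_ =? _); lra. Qed.

Lemma dv_iff q x y : q <> 0 -> ((q | x) <-> (q | y)) -> dv q x = dv q y.
Proof. intros Hq H. destruct (dv_spec q x Hq) as [[A B]|[A B]];
  destruct (dv_spec q y Hq) as [[C D]|[C D]]; try congruence; tauto. Qed.

Lemma dv_opp q x : q <> 0 -> dv q (- x) = dv q x.
Proof. intros; apply dv_iff; auto. apply Z.divide_opp_r. Qed.

Lemma div_step z q : 0 < q -> (z + 1) / q = z / q + (if Z.eqb ((z + 1) mod q) 0 then 1 else 0).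
Proof. intros Hq. pose proof (Z.div_mod z q ltac:(lia)). pose proof (Z.mod_pos_bound z q Hq).
  set (d := z / q) in *. set (r := z mod q) in *.
  destruct (Z.eq_dec r (q - 1)).
  - assert (E: (z + 1) / q = d + 1). { symmetry; apply Z.div_unique with 0; lia. }
    assert (E2: (z + 1) mod q = 0). { symmetry; apply Z.mod_unique with (d + 1); lia. }
    rewrite E, E2; simpl; lia.
  - assert (E: (z + 1) / q = d). { symmetry; apply Z.div_unique with (r + 1); lia. }
    assert (E2: (z + 1) mod q = r + 1). { symmetry; apply Z.mod_unique with d; lia. }
    rewrite E, E2. destruct (Z.eqb_spec (r + 1) 0); lia. Qed.

Lemma rsum_cons1 i F : rsum (i :: nil) F = F i.
Proof. unfold rsum; simpl; lra. Qed.

Lemma count_res q x0 N : 0 < q ->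
  rsum (seq 1 N) (fun m => dv q (Z.of_nat m - x0)) = IZR ((Z.of_nat N - x0) / q - (- x0) / q).
Proof. intros Hq. induction N.
  - assert (E: (Z.of_nat 0 - x0) / q - - x0 / q = 0). { replace (Z.of_nat 0 - x0) with (- x0) by lia. lia. }
    rewrite E. reflexivity.
  - rewrite seq_S, rsum_app, IHN, rsum_cons1.
    replace (Z.of_nat (1 + N) - x0) with ((Z.of_nat N - x0) + 1) by lia.
    replace (Z.of_nat (S N) - x0) with ((Z.of_nat N - x0) + 1) by lia.
    unfold dv. rewrite (div_step _ _ Hq).
    destruct ((Z.of_nat N - x0 + 1) mod q =? 0); rewrite !minus_IZR, !plus_IZR; lra. Qed.

Lemma count_res_near q x0 N : 0 < q ->
  (Rabs (rsum (seq 1 N) (fun m => dv q (Z.of_nat m - x0)) - INR N / IZR q) <= 1)%R.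
Proof. intros Hq. rewrite count_res by auto.
  set (A := (Z.of_nat N - x0) / q). set (B := (- x0) / q).
  pose proof (Z.div_mod (Z.of_nat N - x0) q ltac:(lia)). pose proof (Z.mod_pos_bound (Z.of_nat N - x0) q Hq).
  pose proof (Z.div_mod (- x0) q ltac:(lia)). pose proof (Z.mod_pos_bound (- x0) q Hq).
  fold A B in H, H1.
  assert (Hb: - q < q * (A - B) - Z.of_nat N < q) by lia.
  destruct Hb as [Hb1 Hb2]. apply IZR_lt in Hb1. apply IZR_lt in Hb2.
  rewrite minus_IZR, mult_IZR, minus_IZR, <- INR_IZR_INZ in Hb1, Hb2. rewrite opp_IZR in Hb1.
  assert (Hq' : (0 < IZR q)%R) by (apply IZR_lt; lia).
  rewrite minus_IZR. apply Rabs_le. split.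
  - apply Rmult_le_reg_r with (IZR q); auto. unfold Rdiv. rewrite Rmult_minus_distr_r, Rmult_assoc, Rinv_l by lra. nra.
  - apply Rmult_le_reg_r with (IZR q); auto. unfold Rdiv. rewrite Rmult_minus_distr_r, Rmult_assoc, Rinv_l by lra. nra.
Qed.

Lemma count1D q a c N : 0 < q -> Z.gcd a q = 1 ->
  (Rabs (rsum (seq 1 N) (fun m => dv q (a * Z.of_nat m + c)) - INR N / IZR q) <= 1)%R.
Proof. intros Hq Hg. destruct (extgcd a q) as [[u v] d] eqn:E. apply extgcd_correct in E.
  destruct E as [E1 E2]. rewrite Hg in E2. rewrite E2 in E1. clear E2.
  rewrite (rsum_ext _ _ (fun m => dv q (Z.of_nat m - (- c * u)))).
  apply count_res_near; auto.
  intros m _. apply dv_iff; [lia|]. split; intros H.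
  - replace (Z.of_nat m - - c * u) with (u * (a * Z.of_nat m + c) + (v * Z.of_nat m) * q)
      by (transitivity (Z.of_nat m * (u*a+v*q) + c*u); [ring | rewrite E1; ring]).
    apply Z.divide_add_r. apply Z.divide_mul_r; auto. apply Z.divide_mul_r, Z.divide_refl.
  - replace (a * Z.of_nat m + c) with (a * (Z.of_nat m - - c * u) + (c * v) * q)
      by (transitivity (a * Z.of_nat m + c * (u*a+v*q)); [ring | rewrite E1; ring]).
    apply Z.divide_add_r. apply Z.divide_mul_r; auto. apply Z.divide_mul_r, Z.divide_refl.
Qed.
Close Scope Z_scope.
Fixpoint lin (cs : list Z) (n : list nat) : Z :=
  match cs, n with a :: cs', m :: t => (a * Z.of_nat m + lin cs' t)%Z | _, _ => 0%Z end.

Lemma rsum_near s F c d : (forall i, In i s -> Rabs (F i - c) <= d) ->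
  Rabs (rsum s F - INR (length s) * c) <= INR (length s) * d.
Proof. intros H.
  assert (A1: rsum s (fun _ => c - d) <= rsum s F).
  { apply rsum_le. intros i Hi; specialize (H i Hi). apply Rabs_le_between in H. lra. }
  assert (A2: rsum s F <= rsum s (fun _ => c + d)).
  { apply rsum_le. intros i Hi; specialize (H i Hi). apply Rabs_le_between in H. lra. }
  rewrite !rsum_const in A1, A2. apply Rabs_le; split; lra. Qed.

Lemma rbox_S l N F : rbox (S l) N F = rsum (seq 1 N) (fun m => rbox l N (fun t => F (m :: t))).
Proof. reflexivity. Qed.

Lemma rbox_swap l N G :
  rsum (seq 1 N) (fun m => rbox l N (G m)) = rbox l N (fun t => rsum (seq 1 N) (fun m => G m t)).
Proof. symmetry. apply rbox_rsum. Qed.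

Lemma INR_pos_pow N l : (1 <= N)%nat -> 1 <= INR N ^ l.
Proof. intros H. apply pow_R1_Rle. apply (le_INR 1) in H. simpl in H. lra. Qed.

Lemma pow_pred N l : (1 <= l)%nat -> INR N * INR N ^ (l - 1) = INR N ^ l.
Proof. intros H. destruct l. lia. simpl. rewrite Nat.sub_0_r. auto. Qed.

Lemma count_box q N : (0 < q)%Z -> (1 <= N)%nat -> forall cs c,
  (exists i, (i < length cs)%nat /\ Z.gcd (nth i cs 0%Z) q = 1%Z) ->
  Rabs (rbox (length cs) N (fun n => dv q (c + lin cs n)) - INR N ^ length cs / IZR q)
    <= INR N ^ (length cs - 1).
Proof. intros Hq HN. induction cs as [|a cs IH]; intros c [i [Hi Hg]]. simpl in Hi; lia.
  simpl length. rewrite rbox_S. replace (S (length cs) - 1)%nat with (length cs) by lia.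
  destruct i as [|i].
  - simpl in Hg. rewrite rbox_swap.
    replace (INR N ^ S (length cs) / IZR q) with (INR N ^ length cs * (INR N / IZR q)) by (simpl; field; apply not_0_IZR; lia).
    replace (INR N ^ length cs) with (INR N ^ length cs * 1) at 2 by ring.
    apply rbox_near. intros t.
    rewrite (rsum_ext _ _ (fun m => dv q (a * Z.of_nat m + (c + lin cs t)))).
    apply count1D; auto. intros m _. simpl. f_equal. lia.
  - simpl in Hg, Hi. assert (Hi' : (i < length cs)%nat) by lia.
    assert (H: forall m, In m (seq 1 N) -> Rabs (rbox (length cs) N (fun t => dv q (c + lin (a :: cs) (m :: t)))
            - INR N ^ length cs / IZR q) <= INR N ^ (length cs - 1)).
    { intros m _. rewrite (rbox_ext _ _ _ (fun n => dv q ((c + a * Z.of_nat m) + lin cs n))).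
      apply IH. exists i; auto. intros n; simpl; f_equal; lia. }
    pose proof (rsum_near _ _ _ _ H) as R. rewrite length_seq in R.
    rewrite <- (pow_pred N (length cs)) by lia.
    replace (INR N ^ S (length cs) / IZR q) with (INR N * (INR N ^ length cs / IZR q)) by (simpl; field; apply not_0_IZR; lia).
    auto.
Qed.

Fixpoint zw (a a' : Z) (r r' : list Z) : list Z :=
  match r, r' with x :: r1, y :: r1' => (a * y - a' * x)%Z :: zw a a' r1 r1' | _, _ => nil end.

Lemma lin_zw a a' r r' t : length r = length r' ->
  lin (zw a a' r r') t = (a * lin r' t - a' * lin r t)%Z.
Proof. revert r' t; induction r as [|x r IH]; intros [|y r'] t H; simpl in *; try lia.
  destruct t as [|m t]; simpl. lia. rewrite IH by lia. ring. Qed.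

Lemma zw_length a a' r r' : length r = length r' -> length (zw a a' r r') = length r.
Proof. revert r'; induction r; intros [|y r'] H; simpl in *; try lia. rewrite IHr; lia. Qed.

Lemma zw_nth a a' r r' s : length r = length r' -> (s < length r)%nat ->
  nth s (zw a a' r r') 0%Z = (a * nth s r' 0 - a' * nth s r 0)%Z.
Proof. revert r' s; induction r; intros [|y r'] s H Hs; simpl in *; try lia.
  destruct s; auto. apply IHr; lia. Qed.

Lemma gcd_not_div x p : (2 <= p)%Z -> (p | x)%Z -> Z.gcd x p = 1%Z -> False.
Proof. intros Hp Hx Hg. assert (H: (p | Z.gcd x p)%Z) by (apply Z.gcd_greatest; auto; apply Z.divide_refl).
  rewrite Hg in H. apply Z.divide_pos_le in H; lia. Qed.

Lemma coprime_of_prime p x : prime p -> ~ (p | x)%Z -> Z.gcd x p = 1%Z.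
Proof. intros Hp Hx. apply Zgcd_1_rel_prime. apply rel_prime_sym. apply prime_rel_prime; auto. Qed.

Lemma joint_mixed p N a a' r r' c c' s : prime p -> (1 <= N)%nat -> length r = length r' ->
  (s < length r)%nat -> Z.gcd (nth s (zw a a' r r') 0%Z) p = 1%Z ->
  rbox (S (length r)) N (fun n => dv p (c + lin (a :: r) n) * dv p (c' + lin (a' :: r') n))
    <= INR N ^ S (length r) / IZR p ^ 2 + 3 * INR N ^ length r.
Proof. intros Hp HN Hl Hs Hg. pose proof (prime_ge_2 _ Hp) as Hp2.
  assert (Hp0 : (p <> 0)%Z) by lia.
  assert (Hpr : (0 < IZR p)%R) by (apply IZR_lt; lia). assert (Hp1 : (2 <= IZR p)%R) by (apply IZR_le; lia).
  set (F := fun t => ((a * c' - a' * c) + lin (zw a a' r r') t)%Z).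
  assert (Key : forall m t, (a * (c' + lin (a' :: r') (m :: t)) - a' * (c + lin (a :: r) (m :: t)) = F t)%Z).
  { intros m t. unfold F. rewrite lin_zw by auto. simpl. ring. }
  assert (Ha : Z.gcd a p = 1%Z \/ Z.gcd a' p = 1%Z).
  { destruct (Zdivide_dec p a) as [Da|Da]; [destruct (Zdivide_dec p a') as [Da'|Da']|].
    - exfalso. apply (gcd_not_div _ p Hp2) in Hg; auto. rewrite zw_nth by auto.
      apply Z.divide_sub_r; apply Z.divide_mul_l; auto.
    - right; apply coprime_of_prime; auto.
    - left; apply coprime_of_prime; auto. }
  assert (Pt : forall t, rsum (seq 1 N) (fun m => dv p (c + lin (a :: r) (m :: t)) * dv p (c' + lin (a' :: r') (m :: t)))
                 <= dv p (F t) * (INR N / IZR p + 1)).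
  { intros t. destruct Ha as [Ha|Ha].
    - eapply Rle_trans. apply rsum_le with (G := fun m => dv p (F t) * dv p (a * Z.of_nat m + (c + lin r t))).
      + intros m _. replace (c + lin (a :: r) (m :: t))%Z with (a * Z.of_nat m + (c + lin r t))%Z by (simpl; ring).
        rewrite <- (Key m t). replace (c + lin (a :: r) (m :: t))%Z with (a * Z.of_nat m + (c + lin r t))%Z by (simpl; ring).
        set (X := (a * Z.of_nat m + (c + lin r t))%Z). set (Y := (c' + lin (a' :: r') (m :: t))%Z).
        destruct (dv_spec p X Hp0) as [[A1 A2]|[A1 A2]]; destruct (dv_spec p Y Hp0) as [[B1 B2]|[B1 B2]];
        rewrite A1, B1; try (pose proof (dv_range p (a * Y - a' * X)); nra).
        destruct (dv_spec p (a * Y - a' * X) Hp0) as [[C1 C2]|[C1 C2]]. rewrite C1; lra.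
        exfalso; apply C2. apply Z.divide_sub_r; apply Z.divide_mul_r; auto.
      + rewrite rsum_scal. pose proof (dv_range p (F t)).
        pose proof (count1D p a (c + lin r t) N ltac:(lia) Ha) as Hc. apply Rabs_le_between in Hc.
        apply Rmult_le_compat_l; lra.
    - eapply Rle_trans. apply rsum_le with (G := fun m => dv p (F t) * dv p (a' * Z.of_nat m + (c' + lin r' t))).
      + intros m _. rewrite <- (dv_opp p (F t) Hp0). rewrite <- (Key m t).
        replace (c' + lin (a' :: r') (m :: t))%Z with (a' * Z.of_nat m + (c' + lin r' t))%Z by (simpl; ring).
        set (Y := (a' * Z.of_nat m + (c' + lin r' t))%Z). set (X := (c + lin (a :: r) (m :: t))%Z).
        destruct (dv_spec p X Hp0) as [[A1 A2]|[A1 A2]]; destruct (dv_spec p Y Hp0) as [[B1 B2]|[B1 B2]];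
        rewrite A1, B1; try (pose proof (dv_range p (- (a * Y - a' * X))); nra).
        destruct (dv_spec p (- (a * Y - a' * X)) Hp0) as [[C1 C2]|[C1 C2]]. rewrite C1; lra.
        exfalso; apply C2. apply Z.divide_opp_r. apply Z.divide_sub_r; apply Z.divide_mul_r; auto.
      + rewrite rsum_scal. pose proof (dv_range p (F t)).
        pose proof (count1D p a' (c' + lin r' t) N ltac:(lia) Ha) as Hc. apply Rabs_le_between in Hc.
        apply Rmult_le_compat_l; lra. }
  rewrite rbox_S, rbox_swap. eapply Rle_trans. apply rbox_le. apply Pt.
  rewrite (rbox_ext _ _ _ (fun t => (INR N / IZR p + 1) * dv p (F t))) by (intros; ring).
  rewrite rbox_scal.
  assert (CB := count_box p N ltac:(lia) HN (zw a a' r r') (a * c' - a' * c)%Z).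
  rewrite zw_length in CB by auto. fold F in CB.
  assert (Hex : exists i, (i < length r)%nat /\ Z.gcd (nth i (zw a a' r r') 0%Z) p = 1%Z).
  { exists s; auto. }
  specialize (CB Hex). apply Rabs_le_between in CB.
  assert (HNl := INR_pos_pow N (length r - 1) HN).
  assert (HN1 : 1 <= INR N) by (apply (le_INR 1) in HN; simpl in HN; lra).
  set (K := INR N ^ (length r - 1)) in *.
  assert (E1 : INR N ^ length r = INR N * K) by (unfold K; rewrite pow_pred by lia; auto).
  replace (INR N ^ S (length r)) with (INR N * (INR N * K)) by (simpl; rewrite E1; ring).
  rewrite E1 in CB |- *.
  change (fun n => dv p (a * c' - a' * c + lin (zw a a' r r') n)%Z) with (fun n => dv p (F n)) in CB.
  assert (E : rbox (length r) N (fun t => dv p (F t)) <= INR N * K / IZR p + K) by lra.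
  assert (Hi : 0 < / IZR p <= 1/2).
  { split. apply Rinv_0_lt_compat; lra. replace (1/2) with (/2) by lra. apply Rinv_le_contravar; lra. }
  unfold Rdiv in *. replace (/ IZR p ^ 2) with (/ IZR p * / IZR p) by (field; lra).
  set (i := / IZR p) in *.
  apply Rle_trans with ((INR N * i + 1) * (INR N * K * i + K)).
  apply Rmult_le_compat_l; nra.
  replace ((INR N * i + 1) * (INR N * K * i + K)) with (INR N * (INR N * K) * (i * i) + 2 * ((INR N * K) * i) + K) by ring.
  assert (INR N * K * i <= INR N * K) by (assert (0 <= INR N * K) by nra; nra).
  assert (K <= INR N * K) by nra. lra.
Qed.
Lemma count_joint p N : prime p -> (1 <= N)%nat -> forall cs cs' c c', length cs = length cs' ->
  (exists i j, (i < length cs)%nat /\ (j < length cs)%nat /\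
     Z.gcd (nth i cs 0 * nth j cs' 0 - nth j cs 0 * nth i cs' 0)%Z p = 1%Z) ->
  rbox (length cs) N (fun n => dv p (c + lin cs n) * dv p (c' + lin cs' n))
    <= INR N ^ length cs / IZR p ^ 2 + 3 * INR N ^ (length cs - 1).
Proof. intros Hp HN. pose proof (prime_ge_2 _ Hp) as Hp2.
  induction cs as [|a r IH]; intros cs' c c' Hl [i [j [Hi [Hj Hg]]]]. simpl in Hi; lia.
  destruct cs' as [|a' r']; simpl in Hl; [lia|]. injection Hl as Hl.
  simpl length. replace (S (length r) - 1)%nat with (length r) by lia.
  destruct i as [|i]; destruct j as [|j]; simpl in Hg, Hi, Hj.
  - replace (a * a' - a * a')%Z with 0%Z in Hg by ring. rewrite Z.gcd_0_l in Hg. lia.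
  - apply joint_mixed with j; auto; try lia. rewrite zw_nth by (auto; lia).
    replace (a * nth j r' 0 - a' * nth j r 0)%Z with (a * nth j r' 0 - nth j r 0 * a')%Z by ring. auto.
  - apply joint_mixed with i; auto; try lia. rewrite zw_nth by (auto; lia).
    rewrite <- Z.gcd_opp_l. replace (- (a * nth i r' 0 - a' * nth i r 0))%Z with (nth i r 0 * a' - a * nth i r' 0)%Z by ring. auto.
  - rewrite rbox_S.
    eapply Rle_trans. apply rsum_le with (G := fun _ => INR N ^ length r / IZR p ^ 2 + 3 * INR N ^ (length r - 1)).
    + intros m _. rewrite (rbox_ext _ _ _ (fun n => dv p ((c + a * Z.of_nat m) + lin r n) * dv p ((c' + a' * Z.of_nat m) + lin r' n))).
      apply IH; auto. exists i, j; repeat split; auto; lia.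
      intros n; simpl. f_equal; f_equal; lia.
    + rewrite rsum_const, length_seq.
      replace (INR N ^ S (length r)) with (INR N * INR N ^ length r) by reflexivity.
      rewrite <- (pow_pred N (length r)) by lia.
      assert (IZR p <> 0) by (apply not_0_IZR; lia).
      right. field. auto.
Qed.
Open Scope nat_scope.
Lemma vp_aux_spec p : (2 <= p)%nat -> forall fuel n, (1 <= n <= fuel)%nat ->
  Nat.divide (p ^ vp_aux p fuel n) n /\ ~ Nat.divide (p ^ S (vp_aux p fuel n)) n.
Proof. intros Hp fuel. induction fuel as [|fu IH]; intros n Hn. lia.
  simpl vp_aux. assert (E1 : Nat.ltb 1 p = true) by (apply Nat.ltb_lt; lia).
  assert (E2 : Nat.eqb n 0 = false) by (apply Nat.eqb_neq; lia). rewrite E1, E2. simpl andb.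
  destruct (Nat.eqb_spec (n mod p) 0) as [Hm|Hm].
  - pose proof (Nat.div_mod_eq n p) as Hd. rewrite Hm, Nat.add_0_r in Hd.
    assert (Hq1 : (1 <= n / p)%nat). { destruct (n / p)%nat eqn:E; lia. }
    assert (Hq2 : (n / p < n)%nat) by (apply Nat.div_lt; lia).
    destruct (IH (n / p) ltac:(lia)) as [A B]. set (v := vp_aux p fu (n / p)) in *.
    rewrite Hd. split.
    + simpl. apply Nat.mul_divide_mono_l. auto.
    + intros C. apply B. simpl in C. apply Nat.mul_divide_cancel_l in C; auto. lia.
  - split. simpl. apply Nat.divide_1_l. intros C. apply Hm. simpl in C. rewrite Nat.mul_1_r in C.
    apply Nat.Lcm0.mod_divide. auto.
Qed.

Lemma vp_spec p n : (2 <= p)%nat -> (1 <= n)%nat ->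
  Nat.divide (p ^ vp p n) n /\ ~ Nat.divide (p ^ S (vp p n)) n.
Proof. intros; apply vp_aux_spec; auto. Qed.

Lemma vp_zero p : vp p 0 = 0%nat.
Proof. reflexivity. Qed.

Lemma Zdiv_nat d n : (d <> 0)%nat -> ((Z.of_nat d | Z.of_nat n)%Z <-> Nat.divide d n).
Proof. intros Hd. rewrite <- Z.mod_divide by lia. rewrite <- Nat.Lcm0.mod_divide.
  rewrite <- Nat2Z.inj_mod. lia. Qed.

Lemma skipn_cases s (n : list nat) : (skipn s n = nil /\ nth s n 0%nat = 0%nat /\ skipn (S s) n = nil) \/
  skipn s n = nth s n 0%nat :: skipn (S s) n.
Proof. revert s; induction n as [|x n IH]; intros s.
  - left. destruct s; simpl; auto.
  - destruct s. right; reflexivity. simpl. apply IH. Qed.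

Lemma lin_nil cs : lin cs nil = 0%Z.
Proof. destruct cs; reflexivity. Qed.

Definition coefs (a : nat -> nat -> nat) (j l : nat) : list Z :=
  map (fun r => Z.of_nat (a j r)) (seq 1 l).

Lemma Leval_aux A l : forall s n,
  Z.of_nat (fold_right Nat.add 0%nat (map (fun r => A r * nth (r - 1) n 0) (seq (S s) l))%nat) =
  lin (map (fun r => Z.of_nat (A r)) (seq (S s) l)) (skipn s n).
Proof. induction l as [|l IH]; intros s n. simpl. reflexivity.
  simpl seq. simpl map. simpl fold_right. rewrite Nat.sub_0_r.
  rewrite Nat2Z.inj_add, Nat2Z.inj_mul, IH.
  destruct (skipn_cases s n) as [[A1 [A2 A3]]|A1]; rewrite A1.
  - rewrite A2, A3, !lin_nil. lia.
  - simpl. lia.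
Qed.

Lemma Leval_lin l a j n : Z.of_nat (Leval l a j n) = (Z.of_nat (a j 0%nat) + lin (coefs a j l) n)%Z.
Proof. unfold Leval, coefs. rewrite Nat2Z.inj_add. f_equal. apply (Leval_aux _ l 0 n). Qed.

Lemma coefs_length a j l : length (coefs a j l) = l.
Proof. unfold coefs. rewrite length_map, length_seq. auto. Qed.

Lemma coefs_nth a j l i : (i < l)%nat -> nth i (coefs a j l) 0%Z = Z.of_nat (a j (S i)).
Proof. intros H. unfold coefs. set (f := fun r => Z.of_nat (a j r)).
  rewrite (nth_indep _ _ (f 0)) by (rewrite length_map, length_seq; auto).
  rewrite map_nth, seq_nth by auto. unfold f. f_equal. Qed.

Lemma gcd_list_div (xs : list nat) d : (forall x, In x xs -> Nat.divide d x) -> Nat.divide d (fold_right Nat.gcd 0%nat xs).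
Proof. induction xs; simpl; intros H. apply Nat.divide_0_r.
  apply Nat.gcd_greatest; auto. Qed.

Lemma gcd_list_nonzero (xs : list nat) : fold_right Nat.gcd 0%nat xs = 1%nat -> exists x, In x xs /\ x <> 0%nat.
Proof. intros H. destruct (classic (exists x, In x xs /\ x <> 0%nat)) as [E|E]; auto.
  exfalso. assert (Nat.divide 0 (fold_right Nat.gcd 0%nat xs)).
  { apply gcd_list_div. intros x Hx. destruct (Nat.eq_dec x 0). subst; apply Nat.divide_0_r. exfalso; apply E; eauto. }
  rewrite H in H0. destruct H0 as [z Hz]. lia. Qed.

Lemma prim_coprime a j l (pn : nat) : fold_right Nat.gcd 0%nat (map (a j) (seq 1 l)) = 1%nat ->
  prime (Z.of_nat pn) -> exists i, (i < l)%nat /\ ~ (Z.of_nat pn | nth i (coefs a j l) 0%Z)%Z.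
Proof. intros H Hp. pose proof (prime_ge_2 _ Hp) as Hp2.
  destruct (classic (exists i, (i < l)%nat /\ ~ (Z.of_nat pn | nth i (coefs a j l) 0%Z)%Z)) as [E|E]; auto.
  exfalso. assert (Nat.divide pn (fold_right Nat.gcd 0%nat (map (a j) (seq 1 l)))).
  { apply gcd_list_div. intros x Hx. apply in_map_iff in Hx. destruct Hx as [r [Hr1 Hr2]].
    apply in_seq in Hr2. subst x. apply Zdiv_nat. lia.
    destruct (classic ((Z.of_nat pn | Z.of_nat (a j r))%Z)) as [D|D]; auto. exfalso; apply E.
    exists (r - 1)%nat. split. lia. rewrite coefs_nth by lia. replace (S (r - 1)) with r by lia. auto. }
  rewrite H in H0. apply Nat.divide_1_r in H0. lia. Qed.
Close Scope nat_scope.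
Lemma lin_zero cs n : (forall i, (i < length cs)%nat -> nth i cs 0%Z = 0%Z) -> lin cs n = 0%Z.
Proof. revert n; induction cs as [|x cs IH]; intros n H; simpl. auto.
  destruct n as [|m n]. auto. rewrite IH. pose proof (H 0%nat ltac:(simpl; lia)). simpl in H0. subst. lia.
  intros i Hi. apply (H (S i)). simpl; lia. Qed.

Lemma degenerate p als bes al0 be0 i0 : p <> 0%Z -> length als = length bes -> (i0 < length als)%nat ->
  (forall i, (i < length als)%nat -> (nth i0 als 0 * nth i bes 0 - nth i als 0 * nth i0 bes 0)%Z = 0%Z) ->
  ~ (p | nth i0 als 0 * be0 - nth i0 bes 0 * al0)%Z ->
  forall n, dv p (al0 + lin als n) * dv p (be0 + lin bes n) = 0.
Proof. intros Hp Hl Hi Hm HM n. set (a := nth i0 als 0%Z). set (a' := nth i0 bes 0%Z).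
  assert (Z0 : lin (zw a a' als bes) n = 0%Z).
  { apply lin_zero. intros i Hi'. rewrite zw_length in Hi' by auto. rewrite zw_nth by auto.
    specialize (Hm i Hi'). unfold a, a'. lia. }
  rewrite lin_zw in Z0 by auto.
  destruct (dv_spec p (al0 + lin als n) Hp) as [[A1 A2]|[A1 A2]]; rewrite A1; [|lra].
  destruct (dv_spec p (be0 + lin bes n) Hp) as [[B1 B2]|[B1 B2]]; rewrite B1; [|lra].
  exfalso. apply HM. fold a a'.
  replace (a * be0 - a' * al0)%Z with (a * (be0 + lin bes n) - a' * (al0 + lin als n))%Z by lia.
  apply Z.divide_sub_r; apply Z.divide_mul_r; auto. Qed.

Definition Amax (k l : nat) (a : nat -> nat -> nat) : nat :=
  fold_right Nat.add 0%nat (map (fun j => fold_right Nat.add 0%nat (map (a j) (seq 0 (S l)))) (seq 0 k)).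

Lemma le_sum_in x xs : In x xs -> (x <= fold_right Nat.add 0 xs)%nat.
Proof. induction xs; simpl; intros H. contradiction. destruct H. subst; lia. specialize (IHxs H); lia. Qed.

Lemma a_le_Amax k l a j r : (j < k)%nat -> (r <= l)%nat -> (a j r <= Amax k l a)%nat.
Proof. intros Hj Hr. unfold Amax. eapply Nat.le_trans; [|apply le_sum_in].
  2: { apply in_map_iff. exists j. split. reflexivity. apply in_seq. lia. }
  apply le_sum_in. apply in_map. apply in_seq. lia. Qed.

Lemma minor_small (x y z w A : nat) : (x <= A)%nat -> (y <= A)%nat -> (z <= A)%nat -> (w <= A)%nat ->
  (Z.abs (Z.of_nat x * Z.of_nat y - Z.of_nat z * Z.of_nat w) <= Z.of_nat A * Z.of_nat A)%Z.
Proof. intros. nia. Qed.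

Lemma div_small p m : (0 < p)%Z -> (Z.abs m < p)%Z -> (p | m)%Z -> m = 0%Z.
Proof. intros Hp Hm [c Hc]. subst. destruct (Z.eq_dec c 0). subst; lia. nia. Qed.

Definition Lz (l : nat) (a : nat -> nat -> nat) (j : nat) (n : list nat) : Z := Z.of_nat (Leval l a j n).

Lemma single_count k l a j (pn N : nat) q : primitive_system k l a -> (j < k)%nat -> prime (Z.of_nat pn) ->
  (0 < q)%Z -> (forall x, ~ (Z.of_nat pn | x)%Z -> Z.gcd x q = 1%Z) -> (1 <= N)%nat ->
  Rabs (rbox l N (fun n => dv q (Lz l a j n)) - INR N ^ l / IZR q) <= INR N ^ (l - 1).
Proof. intros [Hg _] Hj Hp Hq Hcop HN.
  destruct (prim_coprime a j l pn (Hg j Hj) Hp) as [i [Hi Hd]].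
  rewrite (rbox_ext _ _ _ (fun n => dv q (Z.of_nat (a j 0%nat) + lin (coefs a j l) n))).
  2: { intros n; unfold Lz; rewrite Leval_lin; auto. }
  pose proof (count_box q N Hq HN (coefs a j l) (Z.of_nat (a j 0%nat))) as C.
  rewrite coefs_length in C. apply C. exists i. split; auto. Qed.

Lemma pair_count k l a j j' (pn N : nat) : primitive_system k l a -> (j < k)%nat -> (j' < k)%nat -> j <> j' ->
  prime (Z.of_nat pn) -> (Amax k l a * Amax k l a < pn)%nat -> (1 <= N)%nat ->
  rbox l N (fun n => dv (Z.of_nat pn) (Lz l a j n) * dv (Z.of_nat pn) (Lz l a j' n))
    <= INR N ^ l / IZR (Z.of_nat pn) ^ 2 + 3 * INR N ^ (l - 1).
Proof. intros [Hg Hind] Hj Hj' Hjj Hp Hbig HN. pose proof (prime_ge_2 _ Hp) as Hp2.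
  set (p := Z.of_nat pn) in *. set (A := Amax k l a) in *.
  rewrite (rbox_ext _ _ _ (fun n => dv p (Z.of_nat (a j 0%nat) + lin (coefs a j l) n) * dv p (Z.of_nat (a j' 0%nat) + lin (coefs a j' l) n))).
  2: { intros n; unfold Lz; rewrite !Leval_lin; auto. }
  assert (Hsm : forall x y z w, (x <= l)%nat -> (y <= l)%nat -> (z <= l)%nat -> (w <= l)%nat ->
     (Z.abs (Z.of_nat (a j x) * Z.of_nat (a j' y) - Z.of_nat (a j z) * Z.of_nat (a j' w)) < p)%Z).
  { intros. eapply Z.le_lt_trans. apply minor_small with (A := A); apply a_le_Amax; auto. unfold p. lia. }
  assert (HRHS : 0 <= INR N ^ l / IZR p ^ 2 + 3 * INR N ^ (l - 1)).
  { assert (0 < IZR p) by (apply IZR_lt; lia). assert (0 <= INR N ^ l) by (apply pow_le, pos_INR).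
    assert (0 <= INR N ^ (l-1)) by (apply pow_le, pos_INR). assert (0 < IZR p ^ 2) by (apply pow_lt; lra).
    assert (0 <= INR N ^ l / IZR p ^ 2) by (apply Rdiv_le_0_compat; lra). lra. }
  destruct (classic (exists i i', (i < l)%nat /\ (i' < l)%nat /\
       ~ (p | nth i (coefs a j l) 0 * nth i' (coefs a j' l) 0 - nth i' (coefs a j l) 0 * nth i (coefs a j' l) 0)%Z)) as [E|E].
  - destruct E as [i [i' [Hi [Hi' Hd]]]].
    pose proof (count_joint p N Hp HN (coefs a j l) (coefs a j' l) (Z.of_nat (a j 0%nat)) (Z.of_nat (a j' 0%nat))) as C.
    rewrite !coefs_length in C. apply C; auto. exists i, i'. repeat split; auto.
    apply coprime_of_prime; auto.
  - assert (Hz : forall i i', (i < l)%nat -> (i' < l)%nat ->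
       (nth i (coefs a j l) 0 * nth i' (coefs a j' l) 0 - nth i' (coefs a j l) 0 * nth i (coefs a j' l) 0)%Z = 0%Z).
    { intros i i' Hi Hi'. apply div_small with p. lia. rewrite !coefs_nth by auto. apply Hsm; lia.
      destruct (classic ((p | nth i (coefs a j l) 0 * nth i' (coefs a j' l) 0 - nth i' (coefs a j l) 0 * nth i (coefs a j' l) 0)%Z)); auto.
      exfalso; apply E; eauto. }
    destruct (gcd_list_nonzero _ (Hg j Hj)) as [x [Hx Hx0]].
    apply in_map_iff in Hx. destruct Hx as [r [Hr1 Hr2]]. apply in_seq in Hr2. subst x.
    set (i0 := (r - 1)%nat).
    assert (Hi0 : (i0 < l)%nat) by (unfold i0; lia).
    assert (Ea : nth i0 (coefs a j l) 0%Z = Z.of_nat (a j r)) by (rewrite coefs_nth by auto; unfold i0; f_equal; f_equal; lia).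
    assert (Eb : nth i0 (coefs a j' l) 0%Z = Z.of_nat (a j' r)) by (rewrite coefs_nth by auto; unfold i0; f_equal; f_equal; lia).
    set (M := (Z.of_nat (a j r) * Z.of_nat (a j' 0%nat) - Z.of_nat (a j' r) * Z.of_nat (a j 0%nat))%Z).
    assert (HM0 : M <> 0%Z).
    { intros HM. destruct (Hind j j' Hj Hj' Hjj (INR (a j' r)) (- INR (a j r))) as [C1 C2].
      - intros r' Hr'. rewrite !INR_IZR_INZ.
        replace (IZR (Z.of_nat (a j' r)) * IZR (Z.of_nat (a j r')) + - IZR (Z.of_nat (a j r)) * IZR (Z.of_nat (a j' r')))
          with (IZR (Z.of_nat (a j' r) * Z.of_nat (a j r') - Z.of_nat (a j r) * Z.of_nat (a j' r'))) by (rewrite minus_IZR, !mult_IZR; ring).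
        replace (Z.of_nat (a j' r) * Z.of_nat (a j r') - Z.of_nat (a j r) * Z.of_nat (a j' r'))%Z with 0%Z. reflexivity.
        destruct r' as [|r'].
        + unfold M in HM. lia.
        + specialize (Hz r' i0 ltac:(lia) Hi0). rewrite Ea, Eb, !coefs_nth in Hz by lia. lia.
      - apply Hx0. apply INR_eq. simpl. lra. }
    assert (HMp : ~ (p | M)%Z).
    { intros D. apply HM0. apply div_small with p; auto. lia. unfold M. rewrite (Z.mul_comm (Z.of_nat (a j' r))). apply Hsm; lia. }
    rewrite (rbox_ext _ _ _ (fun _ => 0)). rewrite rbox_const. lra.
    intros n. apply degenerate with i0; auto. lia. rewrite !coefs_length; auto. rewrite coefs_length; auto.
    intros i Hi. rewrite coefs_length in Hi. rewrite Hz; auto. 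
    rewrite Ea, Eb. auto.
Qed.
Lemma sum_n_rsum (u : nat -> R) M : sum_n u M = rsum (seq 0 (S M)) u.
Proof. induction M. rewrite sum_O. unfold rsum; simpl. symmetry; apply Rplus_0_r.
  rewrite sum_Sn, IHM. rewrite (seq_S (S M)), rsum_app, rsum_cons1. reflexivity. Qed.

Lemma geo_partial q M : q <> 1 -> rsum (seq 0 M) (fun m => q ^ S m) = (q - q ^ S M) / (1 - q).
Proof. intros Hq. induction M. simpl. field. lra.
  rewrite seq_S, rsum_app, IHM. rewrite rsum_cons1. simpl. field. lra. Qed.

Lemma geo_tail q m0 M : 0 <= q < 1 ->
  rsum (seq 0 M) (fun m => if Nat.leb m0 m then q ^ S m else 0) = (q ^ S m0 - q ^ S (Nat.max M m0)) / (1 - q).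
Proof. intros Hq. induction M. simpl. field_simplify; lra.
  rewrite seq_S, rsum_app, IHM. rewrite rsum_cons1. replace (0 + M)%nat with M by lia.
  destruct (Nat.leb_spec m0 M).
  - replace (Nat.max (S M) m0) with (S M) by lia. replace (Nat.max M m0) with M by lia.
    simpl. field. lra.
  - replace (Nat.max M m0) with m0 by lia. replace (Nat.max (S M) m0) with m0 by lia. field. lra. Qed.

Lemma geo_tail_le q m0 M : 0 <= q < 1 ->
  rsum (seq 0 M) (fun m => if Nat.leb m0 m then q ^ S m else 0) <= q ^ S m0 / (1 - q).
Proof. intros Hq. rewrite geo_tail by auto. unfold Rdiv. apply Rmult_le_compat_r.
  apply Rlt_le, Rinv_0_lt_compat; lra. assert (0 <= q ^ S (Nat.max M m0)) by (apply pow_le; lra). lra. Qed.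

Lemma lim_close (s w : nat -> R) (L1 L2 K : R) M0 : is_lim_seq s L1 -> is_lim_seq w L2 ->
  (forall M, (M0 <= M)%nat -> Rabs (s M - w M) <= K) -> Rabs (L1 - L2) <= K.
Proof. intros Hs Hw H.
  pose proof (is_lim_seq_minus' _ _ _ _ Hs Hw) as D.
  assert (U : Rbar_le (L1 - L2) K).
  { apply (is_lim_seq_le_loc (fun n => s n - w n) (fun _ => K)); auto.
    exists M0; intros n Hn; specialize (H n Hn); apply Rabs_le_between in H; lra. apply is_lim_seq_const. }
  assert (L : Rbar_le (- K) (L1 - L2)).
  { apply (is_lim_seq_le_loc (fun _ => - K) (fun n => s n - w n)); auto.
    exists M0; intros n Hn; specialize (H n Hn); apply Rabs_le_between in H; lra. apply is_lim_seq_const. }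
  simpl in U, L. apply Rabs_le; lra. Qed.

Lemma rsum_minus s F G : rsum s (fun m => F m - G m) = rsum s F - rsum s G.
Proof. induction s; simpl. lra. rewrite IHs. lra. Qed.

Lemma comp_series (u b : nat -> R) (B q : R) m0 : 0 <= q < 1 ->
  (forall m, Rabs (u m - b m) <= 2 * q ^ S m) -> ex_series u -> is_lim_seq (sum_n b) B ->
  Rabs (Series u - B - rsum (seq 0 m0) (fun m => u m - b m)) <= 2 * q ^ S m0 / (1 - q).
Proof. intros Hq Hub Hu Hb.
  assert (Hs : is_lim_seq (sum_n u) (Series u)) by (apply Series_correct; auto).
  set (c := rsum (seq 0 m0) (fun m => u m - b m)).
  replace (Series u - B - c) with (Series u - (B + c)) by ring.
  apply lim_close with (s := sum_n u) (w := fun M => sum_n b M + c) (M0 := m0); auto.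
  apply is_lim_seq_plus'; auto. apply is_lim_seq_const.
  intros M HM. rewrite !sum_n_rsum.
  replace (rsum (seq 0 (S M)) u - (rsum (seq 0 (S M)) b + c)) with
    (rsum (seq 0 (S M)) (fun m => u m - b m) - c) by (rewrite rsum_minus; ring).
  replace (S M) with (m0 + (S M - m0))%nat by lia. rewrite seq_app, rsum_app. fold c.
  replace (c + rsum (seq (0 + m0) (S M - m0)) (fun m => u m - b m) - c) with
     (rsum (seq (0 + m0) (S M - m0)) (fun m => u m - b m)) by ring.
  eapply Rle_trans. 
  { assert (forall s, Rabs (rsum s (fun m => u m - b m)) <= rsum s (fun m => Rabs (u m - b m))) as RT.
    { induction s; simpl. rewrite Rabs_R0; lra. eapply Rle_trans. apply Rabs_triang. lra. }
    apply RT. }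
  eapply Rle_trans. apply rsum_le with (G := fun m => 2 * (if Nat.leb m0 m then q ^ S m else 0)).
  { intros m Hm. apply in_seq in Hm. destruct (Nat.leb_spec m0 m). auto. lia. }
  rewrite rsum_scal.
  apply Rle_trans with (2 * rsum (seq 0 m0 ++ seq (0 + m0) (S M - m0)) (fun m => if Nat.leb m0 m then q ^ S m else 0)).
  { rewrite rsum_app. rewrite (rsum_ext (seq 0 m0) _ (fun _ => 0)). rewrite rsum_const. lra.
    intros m Hm. apply in_seq in Hm. destruct (Nat.leb_spec m0 m). lia. auto. }
  rewrite <- seq_app. unfold Rdiv. rewrite Rmult_assoc. apply Rmult_le_compat_l. lra. apply geo_tail_le; auto.
Qed.

Lemma Cmod_le_fst_snd (z : C) : Cmod z <= Rabs (fst z) + Rabs (snd z).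
Proof. destruct z as [x y]. unfold Cmod. cbn [fst snd].
  rewrite <- (sqrt_square (Rabs x + Rabs y)) by (pose proof (Rabs_pos x); pose proof (Rabs_pos y); lra).
  apply sqrt_le_1_alt. rewrite <- (pow2_abs x), <- (pow2_abs y). pose proof (Rabs_pos x); pose proof (Rabs_pos y). nra. Qed.

Lemma fst_le_Cmod (z : C) : Rabs (fst z) <= Cmod z.
Proof. apply re_le_Cmod. Qed.
Lemma snd_le_Cmod (z : C) : Rabs (snd z) <= Cmod z.
Proof. destruct z as [x y]. unfold Cmod. cbn [fst snd]. rewrite <- sqrt_Rsqr_abs. apply sqrt_le_1_alt. unfold Rsqr. nra. Qed.

Lemma csum_fst s F : fst (csum s F) = rsum s (fun i => fst (F i)).
Proof. induction s; simpl; auto. rewrite <- IHs. reflexivity. Qed.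
Lemma csum_snd s F : snd (csum s F) = rsum s (fun i => snd (F i)).
Proof. induction s; simpl; auto. rewrite <- IHs. reflexivity. Qed.

Definition Pl (f : nat -> C) (p : nat) : C :=
  Cmult (RtoC (1 - / INR p))
    (Cplus (RtoC 1) (CSeries (fun m => Cmult (f (p ^ (S m))%nat) (RtoC (/ INR (p ^ (S m))%nat))))).

Lemma geo_lim q : 0 <= q < 1 -> is_lim_seq (sum_n (fun m => q ^ S m)) (q / (1 - q)).
Proof. intros Hq.
  assert (G : is_lim_seq (fun M => q / (1 - q) - q ^ 2 / (1 - q) * q ^ M) (q / (1 - q) - q ^ 2 / (1 - q) * 0)).
  { apply is_lim_seq_minus'. apply is_lim_seq_const. apply is_lim_seq_mult'. apply is_lim_seq_const.
    apply is_lim_seq_geom. rewrite Rabs_pos_eq; lra. }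
  replace (q / (1 - q) - q ^ 2 / (1 - q) * 0) with (q / (1 - q)) in G by ring.
  eapply is_lim_seq_ext; [|exact G]. intros M. rewrite sum_n_rsum, geo_partial by lra. simpl. field. lra. Qed.

Lemma Pl_bound f pn m0 : (2 <= pn)%nat -> (forall m, Cmod (f (pn ^ S m)%nat) <= 1) ->
  Cmod (Pl f pn - 1 - RtoC (1 - / INR pn) * csum (seq 0 m0) (fun m => (f (pn ^ S m)%nat - 1) * RtoC ((/ INR pn) ^ S m)))%C
    <= 4 * (/ INR pn) ^ S m0.
Proof. intros Hp Hf. set (q := / INR pn).
  assert (Hq : 0 < q <= 1/2).
  { unfold q. assert (2 <= INR pn) by (apply (le_INR 2) in Hp; simpl in Hp; lra).
    split. apply Rinv_0_lt_compat; lra. replace (1/2) with (/2) by lra. apply Rinv_le_contravar; lra. }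
  assert (Einv : forall m, / INR (pn ^ S m) = q ^ S m) by (intros; rewrite pow_INR, <- pow_inv; auto).
  set (A := fun m => Cmult (f (pn ^ (S m))%nat) (RtoC (/ INR (pn ^ (S m))%nat))).
  assert (Au : forall m, fst (A m) = fst (f (pn ^ S m)%nat) * q ^ S m) by (intros; unfold A; rewrite Einv; simpl; ring).
  assert (Av : forall m, snd (A m) = snd (f (pn ^ S m)%nat) * q ^ S m) by (intros; unfold A; rewrite Einv; simpl; ring).
  assert (Hqm : forall m, 0 <= q ^ S m <= q ^ m) by (intros; split; [apply pow_le; lra | simpl; pose proof (pow_le q m); nra]).
  assert (Fu : forall m, Rabs (fst (f (pn ^ S m)%nat)) <= 1) by (intros; eapply Rle_trans; [apply fst_le_Cmod|auto]).
  assert (Fv : forall m, Rabs (snd (f (pn ^ S m)%nat)) <= 1) by (intros; eapply Rle_trans; [apply snd_le_Cmod|auto]).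
  assert (Eu : ex_series (fun m => fst (A m))).
  { apply (@ex_series_le R_AbsRing R_CompleteNormedModule) with (b := fun m => q ^ m). intros m. change (norm (fst (A m))) with (Rabs (fst (A m))).
    rewrite Au, Rabs_mult, (Rabs_pos_eq (q ^ S m)) by (apply pow_le; lra). specialize (Hqm m); specialize (Fu m).
    pose proof (Rabs_pos (fst (f (pn ^ S m)%nat))). nra.
    apply ex_series_geom. rewrite Rabs_pos_eq; lra. }
  assert (Ev : ex_series (fun m => snd (A m))).
  { apply (@ex_series_le R_AbsRing R_CompleteNormedModule) with (b := fun m => q ^ m). intros m. change (norm (snd (A m))) with (Rabs (snd (A m))).
    rewrite Av, Rabs_mult, (Rabs_pos_eq (q ^ S m)) by (apply pow_le; lra). specialize (Hqm m); specialize (Fv m).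
    pose proof (Rabs_pos (snd (f (pn ^ S m)%nat))). nra.
    apply ex_series_geom. rewrite Rabs_pos_eq; lra. }
  pose proof (comp_series (fun m => fst (A m)) (fun m => q ^ S m) (q / (1 - q)) q m0 ltac:(lra)) as CU.
  pose proof (comp_series (fun m => snd (A m)) (fun m => 0) 0 q m0 ltac:(lra)) as CV.
  assert (R1 : Rabs (Series (fun m => fst (A m)) - q / (1 - q) - rsum (seq 0 m0) (fun m => fst (A m) - q ^ S m)) <= 2 * q ^ S m0 / (1 - q)).
  { apply CU; auto. intros m. rewrite Au. replace (fst (f (pn ^ S m)%nat) * q ^ S m - q ^ S m) with ((fst (f (pn ^ S m)%nat) - 1) * q ^ S m) by ring.
    rewrite Rabs_mult, (Rabs_pos_eq (q ^ S m)) by (apply pow_le; lra). specialize (Fu m). apply Rabs_le_between in Fu.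
    assert (Rabs (fst (f (pn ^ S m)%nat) - 1) <= 2) by (apply Rabs_le; lra). specialize (Hqm m). nra.
    apply geo_lim; lra. }
  assert (R2 : Rabs (Series (fun m => snd (A m)) - 0 - rsum (seq 0 m0) (fun m => snd (A m) - 0)) <= 2 * q ^ S m0 / (1 - q)).
  { apply CV; auto. intros m. rewrite Av, Rminus_0_r, Rabs_mult, (Rabs_pos_eq (q ^ S m)) by (apply pow_le; lra).
    specialize (Fv m). specialize (Hqm m). pose proof (Rabs_pos (snd (f (pn ^ S m)%nat))). nra.
    eapply is_lim_seq_ext; [|apply is_lim_seq_const]. intros M; rewrite sum_n_rsum.
    rewrite rsum_const. ring. }
  set (S1 := Series (fun m => fst (A m))) in *. set (S2 := Series (fun m => snd (A m))) in *.
  assert (EP1 : fst (Pl f pn) = (1 - q) * (1 + S1)) by (unfold Pl, CSeries, S1, A, q; simpl; ring).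
  assert (EP2 : snd (Pl f pn) = (1 - q) * S2) by (unfold Pl, CSeries, S2, A, q; simpl; ring).
  eapply Rle_trans. apply Cmod_le_fst_snd.
  assert (F3 : forall a b c : C, fst (a - b - c)%C = fst a - fst b - fst c) by (intros; simpl; ring).
  assert (S3 : forall a b c : C, snd (a - b - c)%C = snd a - snd b - snd c) by (intros; simpl; ring).
  assert (FR : forall (r : R) (z : C), fst (RtoC r * z)%C = r * fst z) by (intros; simpl; ring).
  assert (SR : forall (r : R) (z : C), snd (RtoC r * z)%C = r * snd z) by (intros; simpl; ring).
  rewrite F3, S3, FR, SR, csum_fst, csum_snd, EP1, EP2. fold q.
  replace (fst (RtoC 1)) with 1 by reflexivity. replace (snd (RtoC 1)) with 0 by reflexivity.
  rewrite (rsum_ext _ (fun i => fst ((f (pn ^ S i)%nat - 1) * RtoC (q ^ S i))%C) (fun m => fst (A m) - q ^ S m)).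
  2: { intros i _. rewrite Au. simpl. ring. }
  rewrite (rsum_ext _ (fun i => snd ((f (pn ^ S i)%nat - 1) * RtoC (q ^ S i))%C) (fun m => snd (A m) - 0)).
  2: { intros i _. rewrite Av. simpl. ring. }
  set (T1 := rsum (seq 0 m0) (fun m => fst (A m) - q ^ S m)) in *.
  set (T2 := rsum (seq 0 m0) (fun m => snd (A m) - 0)) in *.
  replace ((1 - q) * (1 + S1) - 1 - (1 - q) * T1) with ((1 - q) * (S1 - q / (1 - q) - T1)) by (field; lra).
  replace ((1 - q) * S2 - 0 - (1 - q) * T2) with ((1 - q) * (S2 - 0 - T2)) by ring.
  rewrite !Rabs_mult, (Rabs_pos_eq (1 - q)) by lra.
  assert ((1 - q) * (2 * q ^ S m0 / (1 - q)) = 2 * q ^ S m0) by (field; lra).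
  assert (0 < 1 - q) by lra. nra.
Qed.

Lemma Cmod_sub_diag z : Cmod (z - z)%C = 0.
Proof. replace (z - z)%C with (RtoC 0) by ring. apply Cmod_0. Qed.

Lemma floc_dec (F : nat -> C) pn L : (2 <= pn)%nat -> F 1%nat = RtoC 1 -> (forall m, (1 <= m)%nat -> Cmod (F m) <= 1) ->
  Cmod (F (pn ^ vp pn L)%nat - 1 - (F pn - 1) * RtoC (dv (Z.of_nat pn) (Z.of_nat L) - dv (Z.of_nat pn * Z.of_nat pn) (Z.of_nat L)))%C
     <= 2 * dv (Z.of_nat pn * Z.of_nat pn) (Z.of_nat L) /\
  Cmod (F (pn ^ vp pn L)%nat - 1)%C <= 2 * dv (Z.of_nat pn) (Z.of_nat L).
Proof. intros Hp F1 Fb.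
  assert (Fm : forall m, (1 <= m)%nat -> Cmod (F m - 1)%C <= 2).
  { intros m Hm. eapply Rle_trans. unfold Cminus. apply Cmod_triangle. rewrite Cmod_opp, Cmod_1. specialize (Fb m Hm). lra. }
  assert (Hpp : (1 <= pn ^ vp pn L)%nat) by (apply Nat.le_succ_l, Nat.neq_0_lt_0, Nat.pow_nonzero; lia).
  assert (HP0 : Z.of_nat pn <> 0%Z) by lia. assert (HPP0 : (Z.of_nat pn * Z.of_nat pn <> 0)%Z) by lia.
  assert (Z0 : forall (c : C), (c - 1 - (F pn - 1) * RtoC 0 = c - 1)%C).
  { intros c. apply injective_projections; simpl; ring. }
  destruct (Nat.eq_dec L 0) as [->|HL].
  - rewrite vp_zero. simpl Nat.pow. rewrite F1. unfold dv. simpl Z.modulo. rewrite !Zmod_0_l. simpl.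
    replace (1 - 1)%R with 0%R by ring. rewrite Z0.
    rewrite Cmod_sub_diag. lra.
  - destruct (vp_spec pn L Hp ltac:(lia)) as [D1 D2]. set (v := vp pn L) in *.
    assert (PP : forall d, (d <> 0)%nat -> (Z.of_nat d | Z.of_nat L)%Z <-> Nat.divide d L) by (intros; apply Zdiv_nat; auto).
    assert (EPP : (Z.of_nat pn * Z.of_nat pn)%Z = Z.of_nat (pn * pn)) by lia.
    rewrite EPP.
    destruct v as [|[|v]].
    + simpl in D2. rewrite Nat.mul_1_r in D2. simpl Nat.pow. rewrite F1.
      destruct (dv_spec (Z.of_nat pn) (Z.of_nat L) HP0) as [[A1 A2]|[A1 A2]].
      { exfalso. apply D2. apply PP; auto; lia. }
      destruct (dv_spec (Z.of_nat (pn * pn)) (Z.of_nat L) ltac:(lia)) as [[B1 B2]|[B1 B2]].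
      { exfalso. apply D2. apply PP in B2; [|lia]. eapply Nat.divide_trans; [|exact B2]. apply Nat.divide_factor_l. }
      rewrite A1, B1. replace (0 - 0)%R with 0%R by ring. rewrite Z0. rewrite Cmod_sub_diag. lra.
    + simpl Nat.pow in *. rewrite Nat.mul_1_r in *.
      destruct (dv_spec (Z.of_nat pn) (Z.of_nat L) HP0) as [[A1 A2]|[A1 A2]].
      2: { exfalso. apply A2. apply PP; auto; lia. }
      destruct (dv_spec (Z.of_nat (pn * pn)) (Z.of_nat L) ltac:(lia)) as [[B1 B2]|[B1 B2]].
      { exfalso. apply D2. apply PP in B2; [|lia]. auto. }
      rewrite A1, B1. replace (1 - 0)%R with 1%R by ring. split.
      replace (F pn - 1 - (F pn - 1) * RtoC 1)%C with (RtoC 0) by ring. rewrite Cmod_0. lra.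
      specialize (Fm pn ltac:(lia)). lra.
    + assert (Hd : Nat.divide (pn * pn) L).
      { eapply Nat.divide_trans; [|exact D1]. exists (pn ^ v)%nat. simpl. ring. }
      destruct (dv_spec (Z.of_nat pn) (Z.of_nat L) HP0) as [[A1 A2]|[A1 A2]].
      2: { exfalso. apply A2. apply PP; [lia|]. eapply Nat.divide_trans; [|exact Hd]. apply Nat.divide_factor_l. }
      destruct (dv_spec (Z.of_nat (pn * pn)) (Z.of_nat L) ltac:(lia)) as [[B1 B2]|[B1 B2]].
      2: { exfalso. apply B2. apply PP; auto; lia. }
      rewrite A1, B1. replace (1 - 1)%R with 0%R by ring. rewrite Z0. split; apply Rle_trans with 2; try lra; apply Fm; auto.
Qed.

Lemma box_sum_const l N c : box_sum l N (fun _ => c) = (RtoC (INR N ^ l) * c)%C.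
Proof. induction l; simpl. ring.
  rewrite (csum_ext _ _ (fun _ => (RtoC (INR N ^ l) * c)%C)) by auto.
  assert (forall s (d : C), csum s (fun _ => d) = (RtoC (INR (length s)) * d)%C) as CC.
  { induction s; intros d; simpl. ring. rewrite IHs. destruct (length s) eqn:E. simpl. ring.
    rewrite S_INR. apply injective_projections; simpl; ring. }
  rewrite CC, length_seq. apply injective_projections; simpl; ring. Qed.

Lemma box_sum_csum l N s H :
  box_sum l N (fun n => csum s (fun j => H j n)) = csum s (fun j => box_sum l N (H j)).
Proof. induction s; simpl. rewrite box_sum_const. ring.
  rewrite box_sum_plus, IHs. auto. Qed.

Lemma pairsum_mono s g g' : (forall i, 0 <= g i <= g' i) -> pairsum s g <= pairsum s g'.
Proof. intros H. induction s; simpl. lra.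
  assert (rsum s g <= rsum s g') by (apply rsum_le; intros; apply H).
  assert (0 <= rsum s g) by (apply rsum_nonneg; intros; apply H).
  pose proof (H a). nra. Qed.

Lemma pairsum_scal s c g : pairsum s (fun i => c * g i) = c ^ 2 * pairsum s g.
Proof. induction s; simpl. ring. rewrite IHs, rsum_scal. ring. Qed.

Lemma pairsum_const_bound s g c : (forall i, 0 <= g i <= c) -> pairsum s g <= INR (length s) ^ 2 * c ^ 2.
Proof. intros H. induction s; simpl length. simpl; lra.
  simpl pairsum. rewrite S_INR.
  assert (rsum s g <= INR (length s) * c) by (rewrite <- rsum_const; apply rsum_le; intros; apply H).
  assert (0 <= rsum s g) by (apply rsum_nonneg; intros; apply H).
  pose proof (H a). pose proof (pos_INR (length s)). nra. Qed.

Lemma rbox_pairsum l N s (g : nat -> list nat -> R) B : NoDup s -> 0 <= B ->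
  (forall i j, In i s -> In j s -> i <> j -> rbox l N (fun n => g i n * g j n) <= B) ->
  rbox l N (fun n => pairsum s (fun j => g j n)) <= INR (length s) ^ 2 * B.
Proof. intros Hnd HB H. induction s as [|i t IH]; simpl pairsum. rewrite rbox_const. simpl; lra.
  inversion Hnd as [|i' t' Hni Hnd']; subst.
  rewrite rbox_plus. rewrite (rbox_ext _ _ _ (fun n => rsum t (fun j => g i n * g j n))) by (intros; rewrite rsum_scal; auto).
  rewrite rbox_rsum.
  assert (A1 : rsum t (fun j => rbox l N (fun n => g i n * g j n)) <= INR (length t) * B).
  { rewrite <- rsum_const. apply rsum_le. intros j Hj. apply H; simpl; auto. intros ->; auto. }
  assert (A2 := IH Hnd' (fun i j Hi Hj => H i j (or_intror Hi) (or_intror Hj))).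
  simpl length. rewrite S_INR. pose proof (pos_INR (length t)). nra. Qed.

Lemma rbox_minus l N F G : rbox l N (fun n => F n - G n) = rbox l N F - rbox l N G.
Proof. rewrite (rbox_ext _ _ _ (fun n => F n + (-1) * G n)) by (intros; ring).
  rewrite rbox_plus, rbox_scal. ring. Qed.

Lemma RtoC_mult (x y : R) : RtoC (x * y) = (RtoC x * RtoC y)%C.
Proof. apply injective_projections; simpl; ring. Qed.

Lemma Cmod_RtoC_mul (x : R) (z : C) : 0 <= x -> Cmod (RtoC x * z)%C = x * Cmod z.
Proof. intros H. rewrite Cmod_mult, Cmod_R, Rabs_pos_eq; auto. Qed.

Lemma inv_pow_pos N l : (1 <= N)%nat -> 0 < / INR N ^ l.
Proof. intros H. apply Rinv_0_lt_compat, pow_lt. apply (le_INR 1) in H. simpl in H. lra. Qed.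

Lemma norm_count N l (X c : R) : (1 <= N)%nat -> (1 <= l)%nat ->
  Rabs (X - INR N ^ l * c) <= INR N ^ (l - 1) -> Rabs (/ INR N ^ l * X - c) <= / INR N.
Proof. intros HN Hl H. assert (HN1 : 1 <= INR N) by (apply (le_INR 1) in HN; simpl in HN; lra).
  assert (E : INR N ^ l = INR N * INR N ^ (l - 1)) by (rewrite pow_pred; auto).
  assert (Hp : 0 < INR N ^ (l - 1)) by (apply pow_lt; lra).
  replace (/ INR N ^ l * X - c) with (/ INR N ^ l * (X - INR N ^ l * c)) by (field; apply pow_nonzero; lra).
  rewrite Rabs_mult, Rabs_pos_eq by (apply Rlt_le, Rinv_0_lt_compat, pow_lt; lra).
  eapply Rle_trans. apply Rmult_le_compat_l. apply Rlt_le, Rinv_0_lt_compat, pow_lt; lra. exact H.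
  rewrite E. right. field. lra. Qed.

Lemma coprime_sq pn x : prime (Z.of_nat pn) -> ~ (Z.of_nat pn | x)%Z -> Z.gcd x (Z.of_nat pn * Z.of_nat pn) = 1%Z.
Proof. intros Hp Hx. apply Zgcd_1_rel_prime. apply rel_prime_mult; apply rel_prime_sym, prime_rel_prime; auto. Qed.

Lemma lin_term k l a f pn N j : primitive_system k l a -> prime (Z.of_nat pn) -> (j < k)%nat ->
  one_bounded (f j) -> multiplicative (f j) -> (1 <= N)%nat -> (1 <= l)%nat ->
  Cmod (RtoC (/ INR N ^ l) * box_sum l N (fun n => floc (f j) pn (Leval l a j n) - 1) - (Pl (f j) pn - 1))%C
    <= 6 * (/ INR pn) ^ 2 + 6 * / INR N.
Proof. intros Hsys Hp Hj Hb [F1 _] HN Hl.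
  pose proof (prime_ge_2 _ Hp) as Hp2. assert (Hpn : (2 <= pn)%nat) by lia.
  set (P := Z.of_nat pn) in *. set (q := / INR pn).
  assert (HPR : IZR P = INR pn) by (unfold P; rewrite INR_IZR_INZ; auto).
  assert (Hq : 0 < q <= 1/2).
  { unfold q. assert (2 <= INR pn) by (apply (le_INR 2) in Hpn; simpl in Hpn; lra).
    split. apply Rinv_0_lt_compat; lra. replace (1/2) with (/2) by lra. apply Rinv_le_contravar; lra. }
  set (dP := fun n => dv P (Lz l a j n)). set (dPP := fun n => dv (P * P) (Lz l a j n)).
  set (fp1 := (f j pn - 1)%C).
  set (T := fun n => (floc (f j) pn (Leval l a j n) - 1 - fp1 * RtoC (dP n - dPP n))%C).
  assert (Dec := fun n => floc_dec (f j) pn (Leval l a j n) Hpn F1 (fun m Hm => Hb m Hm)).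
  assert (HT : forall n, Cmod (T n) <= 2 * dPP n) by (intros n; apply (Dec n)).
  assert (Hfp1 : Cmod fp1 <= 2).
  { unfold fp1. eapply Rle_trans. unfold Cminus. apply Cmod_triangle. rewrite Cmod_opp, Cmod_1. specialize (Hb pn ltac:(lia)). lra. }
  rewrite (box_sum_ext _ _ _ (fun n => (fp1 * RtoC (dP n - dPP n) + T n)%C)) by (intros; unfold T; ring).
  rewrite box_sum_plus, box_sum_scal, box_sum_RtoC, rbox_minus.
  pose proof (single_count k l a j pn N P Hsys Hj Hp ltac:(lia) (fun x Hx => coprime_of_prime _ _ Hp Hx) HN) as C1.
  pose proof (single_count k l a j pn N (P * P) Hsys Hj Hp ltac:(lia) (fun x Hx => coprime_sq pn x Hp Hx) HN) as C2.
  fold dP in C1. fold dPP in C2. rewrite HPR in C1. rewrite mult_IZR, HPR in C2.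
  apply (norm_count N l _ _ HN Hl) in C1. apply (norm_count N l _ _ HN Hl) in C2.
  assert (Hpn0 : INR pn <> 0) by (apply not_0_INR; lia).
  fold q in C1. replace (/ (INR pn * INR pn)) with (q ^ 2) in C2 by (unfold q; field; auto).
  assert (Hbp : forall m, Cmod (f j (pn ^ S m)%nat) <= 1).
  { intros m. apply Hb. pose proof (Nat.pow_nonzero pn (S m)). lia. }
  pose proof (Pl_bound (f j) pn 1 Hpn Hbp) as PB.
  fold q in PB. simpl csum in PB. rewrite Nat.mul_1_r in PB. fold fp1 in PB.
  set (err := (Pl (f j) pn - 1 - RtoC (1 - q) * (fp1 * RtoC (q ^ 1) + 0))%C) in PB.
  set (X := rbox l N dP) in *. set (Y := rbox l N dPP) in *.
  set (BN := / INR N ^ l).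
  assert (HBN : 0 < BN) by (apply inv_pow_pos; auto).
  replace (RtoC BN * (fp1 * RtoC (X - Y) + box_sum l N T) - (Pl (f j) pn - 1))%C with
    (fp1 * RtoC (BN * X - q - (BN * Y - q ^ 2)) + RtoC BN * box_sum l N T - err)%C.
  2: { unfold err. apply injective_projections; simpl; ring. }
  eapply Rle_trans. unfold Cminus. apply Cmod_triangle. rewrite Cmod_opp.
  eapply Rle_trans. apply Rplus_le_compat_r. apply Cmod_triangle.
  rewrite Cmod_mult, Cmod_R, Cmod_RtoC_mul by lra.
  assert (B1 : Rabs (BN * X - q - (BN * Y - q ^ 2)) <= 2 * / INR N).
  { eapply Rle_trans. unfold Rminus at 1. apply Rabs_triang. rewrite Rabs_Ropp. unfold BN. lra. }
  assert (B2 : BN * Cmod (box_sum l N T) <= 2 * (q ^ 2 + / INR N)).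
  { eapply Rle_trans. apply Rmult_le_compat_l. lra. apply Cmod_box.
    eapply Rle_trans. apply Rmult_le_compat_l. lra. apply rbox_le with (G := fun n => 2 * dPP n). auto.
    rewrite rbox_scal. fold Y. apply Rabs_le_between in C2. unfold BN in *. nra. }
  assert (0 <= Cmod fp1) by apply Cmod_ge_0.
  replace (q ^ S 1) with (q ^ 2) in PB by reflexivity.
  assert (Cmod fp1 * Rabs (BN * X - q - (BN * Y - q ^ 2)) <= 2 * (2 * / INR N)).
  { apply Rmult_le_compat; auto. apply Rabs_pos. }
  assert (Herr : Cmod err <= 4 * q ^ 2). { unfold err. replace (q ^ 1) with (q * 1) by ring. exact PB. }
  lra.
Qed.

Lemma pairsum_mono_in s g g' : (forall i, In i s -> 0 <= g i <= g' i) -> pairsum s g <= pairsum s g'.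
Proof. intros H. induction s; simpl. lra.
  assert (rsum s g <= rsum s g') by (apply rsum_le; intros; apply H; simpl; auto).
  assert (0 <= rsum s g) by (apply rsum_nonneg; intros; apply H; simpl; auto).
  pose proof (H a (or_introl eq_refl)). pose proof (IHs (fun i Hi => H i (or_intror Hi))). nra. Qed.

Definition hh (l : nat) (a : nat -> nat -> nat) (f : nat -> nat -> C) (pn j : nat) (n : list nat) : C :=
  (floc (f j) pn (Leval l a j n) - 1)%C.

Lemma R_term k l a f pn N : primitive_system k l a -> prime (Z.of_nat pn) -> (Amax k l a * Amax k l a < pn)%nat ->
  (forall j, (j < k)%nat -> one_bounded (f j) /\ multiplicative (f j)) -> (1 <= N)%nat -> (1 <= l)%nat ->
  Cmod (RtoC (/ INR N ^ l) * box_sum l N (fun n => cprod (seq 0 k) (fun j => 1 + hh l a f pn j n)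
           - 1 - csum (seq 0 k) (fun j => hh l a f pn j n)))%C
    <= 4 * 3 ^ k * INR k ^ 2 * ((/ INR pn) ^ 2 + 3 * / INR N).
Proof. intros Hsys Hp Hbig Hf HN Hl.
  pose proof (prime_ge_2 _ Hp) as Hp2. assert (Hpn : (2 <= pn)%nat) by lia.
  assert (HPR : IZR (Z.of_nat pn) = INR pn) by (rewrite INR_IZR_INZ; auto).
  assert (HN1 : 1 <= INR N) by (apply (le_INR 1) in HN; simpl in HN; lra).
  assert (Hpn0 : 0 < INR pn) by (apply lt_0_INR; lia).
  assert (Hh : forall j n, (j < k)%nat -> Cmod (hh l a f pn j n) <= 2 * dv (Z.of_nat pn) (Lz l a j n)).
  { intros j n Hj. destruct (Hf j Hj) as [Hb [F1 _]]. unfold hh, floc, Lz.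
    apply (floc_dec (f j) pn (Leval l a j n) Hpn F1 (fun m Hm => Hb m Hm)). }
  rewrite Cmod_RtoC_mul by (apply Rlt_le, inv_pow_pos; auto).
  eapply Rle_trans. apply Rmult_le_compat_l. apply Rlt_le, inv_pow_pos; auto. apply Cmod_box.
  eapply Rle_trans. apply Rmult_le_compat_l. apply Rlt_le, inv_pow_pos; auto.
  apply rbox_le with (G := fun n => 3 ^ k * (2 ^ 2 * pairsum (seq 0 k) (fun j => dv (Z.of_nat pn) (Lz l a j n)))).
  { intros n. eapply Rle_trans. apply cprod_R.
    intros j Hj. apply in_seq in Hj. eapply Rle_trans. apply Hh. lia. pose proof (dv_range (Z.of_nat pn) (Lz l a j n)). lra.
    rewrite length_seq. apply Rmult_le_compat_l. apply pow_le; lra.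
    rewrite <- pairsum_scal. apply pairsum_mono_in. intros j Hj. apply in_seq in Hj. split. apply Cmod_ge_0. apply Hh. lia. }
  rewrite rbox_scal, rbox_scal.
  assert (RP := rbox_pairsum l N (seq 0 k) (fun j n => dv (Z.of_nat pn) (Lz l a j n))
                 (INR N ^ l / IZR (Z.of_nat pn) ^ 2 + 3 * INR N ^ (l - 1)) (seq_NoDup k 0)).
  rewrite length_seq in RP.
  assert (HB : 0 <= INR N ^ l / IZR (Z.of_nat pn) ^ 2 + 3 * INR N ^ (l - 1)).
  { rewrite HPR. assert (0 < INR N ^ l) by (apply pow_lt; lra). assert (0 < INR N ^ (l-1)) by (apply pow_lt; lra).
    assert (0 < INR N ^ l / INR pn ^ 2) by (apply Rdiv_lt_0_compat; auto; apply pow_lt; lra). lra. }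
  specialize (RP HB).
  assert (RP' : rbox l N (fun n => pairsum (seq 0 k) (fun j => dv (Z.of_nat pn) (Lz l a j n)))
               <= INR k ^ 2 * (INR N ^ l / IZR (Z.of_nat pn) ^ 2 + 3 * INR N ^ (l - 1))).
  { apply RP. intros i j Hi Hj Hij. apply in_seq in Hi. apply in_seq in Hj.
    apply pair_count with k; auto; lia. }
  rewrite HPR in RP'.
  assert (E : / INR N ^ l * (INR N ^ l / INR pn ^ 2 + 3 * INR N ^ (l - 1)) = (/ INR pn) ^ 2 + 3 * / INR N).
  { rewrite <- (pow_pred N l) by auto. field. repeat split; try (apply Rgt_not_eq; lra); apply pow_nonzero; lra. }
  assert (0 <= 3 ^ k) by (apply pow_le; lra).
  assert (0 < / INR N ^ l) by (apply inv_pow_pos; auto).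
  apply Rle_trans with (/ INR N ^ l * (3 ^ k * (2 ^ 2 * (INR k ^ 2 * (INR N ^ l / INR pn ^ 2 + 3 * INR N ^ (l - 1)))))).
  { apply Rmult_le_compat_l. lra. apply Rmult_le_compat_l. lra. apply Rmult_le_compat_l. lra. auto. }
  right. replace (/ INR N ^ l * (3 ^ k * (2 ^ 2 * (INR k ^ 2 * (INR N ^ l / INR pn ^ 2 + 3 * INR N ^ (l - 1))))))
    with (4 * 3 ^ k * INR k ^ 2 * (/ INR N ^ l * (INR N ^ l / INR pn ^ 2 + 3 * INR N ^ (l - 1)))) by ring.
  rewrite E. ring.
Qed.

Lemma Cmod_sub_le (x y : C) : Cmod (x - y)%C <= Cmod x + Cmod y.
Proof. unfold Cminus. eapply Rle_trans. apply Cmod_triangle. rewrite Cmod_opp. lra. Qed.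

Definition Dk (k : nat) : R := 30 * 3 ^ k * (INR k + 1) ^ 2.

Lemma csum_minus s F G : csum s (fun i => (F i - G i)%C) = (csum s F - csum s G)%C.
Proof. induction s; simpl. ring. rewrite IHs; ring. Qed.

Lemma local_bound k l a f pn N : primitive_system k l a -> prime (Z.of_nat pn) -> (Amax k l a * Amax k l a < pn)%nat ->
  (forall j, (j < k)%nat -> one_bounded (f j) /\ multiplicative (f j)) -> (1 <= N)%nat ->
  Cmod (RtoC (/ INR N ^ l) * box_sum l N (fun n => cprod (seq 0 k) (fun j => floc (f j) pn (Leval l a j n)))
        - cprod (seq 0 k) (fun j => Pl (f j) pn))%C <= Dk k * ((/ INR pn) ^ 2 + / INR N).
Proof. intros Hsys Hp Hbig Hf HN.
  pose proof (prime_ge_2 _ Hp) as Hp2. assert (Hpn : (2 <= pn)%nat) by lia.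
  assert (HN1 : 1 <= INR N) by (apply (le_INR 1) in HN; simpl in HN; lra).
  assert (Hpn2 : 2 <= INR pn) by (apply (le_INR 2) in Hpn; simpl in Hpn; lra).
  set (q := / INR pn).
  assert (Hq : 0 < q <= 1/2).
  { unfold q. split. apply Rinv_0_lt_compat; lra. replace (1/2) with (/2) by lra. apply Rinv_le_contravar; lra. }
  assert (HDk : 0 <= Dk k) by (unfold Dk; pose proof (pow_le 3 k ltac:(lra)); pose proof (pos_INR k); nra).
  assert (HiN : 0 < / INR N) by (apply Rinv_0_lt_compat; lra).
  assert (HBN : 0 < / INR N ^ l) by (apply inv_pow_pos; auto).
  assert (HBNe : (RtoC (/ INR N ^ l) * RtoC (INR N ^ l))%C = RtoC 1).
  { rewrite <- RtoC_mult. f_equal. field. apply pow_nonzero; lra. }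
  destruct k as [|k'].
  - simpl cprod. rewrite box_sum_const. replace (RtoC (/ INR N ^ l) * (RtoC (INR N ^ l) * RtoC 1) - RtoC 1)%C with (RtoC 0).
    rewrite Cmod_0. pose proof (pow2_ge_0 q). nra.
    replace (RtoC (/ INR N ^ l) * (RtoC (INR N ^ l) * RtoC 1))%C with ((RtoC (/ INR N ^ l) * RtoC (INR N ^ l)) * RtoC 1)%C by ring.
    rewrite HBNe. ring.
  - set (k := S k') in *.
    assert (Hl : (1 <= l)%nat).
    { destruct l. destruct Hsys as [Hg _]. specialize (Hg 0%nat ltac:(unfold k; lia)). simpl in Hg. lia. lia. }
    set (h := hh l a f pn). set (e := fun j => (Pl (f j) pn - 1)%C).
    set (Rn := fun n => (cprod (seq 0 k) (fun j => 1 + h j n) - 1 - csum (seq 0 k) (fun j => h j n))%C).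
    set (Re := (cprod (seq 0 k) (fun j => 1 + e j) - 1 - csum (seq 0 k) e)%C).
    set (BN := / INR N ^ l) in *.
    assert (EQ : (RtoC BN * box_sum l N (fun n => cprod (seq 0 k) (fun j => floc (f j) pn (Leval l a j n)))
        - cprod (seq 0 k) (fun j => Pl (f j) pn))%C =
        (csum (seq 0 k) (fun j => RtoC BN * box_sum l N (h j) - e j) + RtoC BN * box_sum l N Rn - Re)%C).
    { rewrite (box_sum_ext _ _ _ (fun n => (RtoC 1 + (csum (seq 0 k) (fun j => h j n) + Rn n))%C)).
      2: { intros n. unfold Rn. rewrite (cprod_ext _ _ (fun j => 1 + h j n)%C). ring. intros j _. unfold h, hh. ring. }
      rewrite box_sum_plus, box_sum_plus, box_sum_csum, box_sum_const, csum_minus, csum_scal.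
      rewrite (cprod_ext _ (fun j => Pl (f j) pn) (fun j => 1 + e j)%C) by (intros; unfold e; ring).
      unfold Re. replace (RtoC BN * (RtoC (INR N ^ l) * RtoC 1 + (csum (seq 0 k) (fun j => box_sum l N (h j)) + box_sum l N Rn)))%C
        with ((RtoC BN * RtoC (INR N ^ l)) * RtoC 1 + (RtoC BN * csum (seq 0 k) (fun j => box_sum l N (h j)) + RtoC BN * box_sum l N Rn))%C by ring.
      rewrite HBNe. ring. }
    rewrite EQ. clear EQ.
    assert (B1 : Cmod (csum (seq 0 k) (fun j => RtoC BN * box_sum l N (h j) - e j)%C) <= INR k * (6 * q ^ 2 + 6 * / INR N)).
    { eapply Rle_trans. apply Cmod_csum. rewrite <- (length_seq k 0) at 2. rewrite <- rsum_const. apply rsum_le.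
      intros j Hj. apply in_seq in Hj. destruct (Hf j ltac:(lia)) as [Hb Hm].
      apply (lin_term k l a f pn N j); auto. lia. }
    assert (B2 : Cmod (RtoC BN * box_sum l N Rn)%C <= 4 * 3 ^ k * INR k ^ 2 * (q ^ 2 + 3 * / INR N)).
    { apply R_term; auto. }
    assert (He : forall j, (j < k)%nat -> Cmod (e j) <= 4 * q).
    { intros j Hj. destruct (Hf j Hj) as [Hb _].
      assert (Hbp : forall m, Cmod (f j (pn ^ S m)%nat) <= 1).
      { intros m. apply Hb. pose proof (Nat.pow_nonzero pn (S m)). lia. }
      pose proof (Pl_bound (f j) pn 0 Hpn Hbp) as PB. simpl csum in PB. fold q in PB.
      replace (Pl (f j) pn - 1 - RtoC (1 - q) * RtoC 0)%C with (e j) in PB by (unfold e; ring).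
      replace (q ^ 1) with q in PB by ring. auto. }
    assert (B3 : Cmod Re <= 3 ^ k * (INR k ^ 2 * (4 * q) ^ 2)).
    { unfold Re. eapply Rle_trans. apply cprod_R. intros j Hj. apply in_seq in Hj. specialize (He j ltac:(lia)). lra.
      rewrite length_seq. apply Rmult_le_compat_l. apply pow_le; lra.
      eapply Rle_trans. apply pairsum_mono_in with (g' := fun _ => 4 * q).
      intros j Hj. apply in_seq in Hj. split. apply Cmod_ge_0. apply He; lia.
      rewrite <- (length_seq k 0) at 2. apply pairsum_const_bound. intros; lra. }
    eapply Rle_trans. apply Cmod_sub_le.
    eapply Rle_trans. apply Rplus_le_compat_r. apply Cmod_triangle.
    fold q. unfold Dk.
    set (K := INR k) in *. set (T := 3 ^ k) in *. set (y := / INR N) in *.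
    assert (HT : 1 <= T) by (apply pow_R1_Rle; lra). assert (HK : 0 <= K) by apply pos_INR.
    assert (Hx : 0 <= q ^ 2) by (apply pow2_ge_0).
    assert (C1 : 6 * K + 20 * T * K ^ 2 <= 30 * T * (K + 1) ^ 2) by nra.
    assert (C2 : 6 * K + 12 * T * K ^ 2 <= 30 * T * (K + 1) ^ 2) by nra.
    assert (E1 : (6 * K + 20 * T * K ^ 2) * q ^ 2 <= 30 * T * (K + 1) ^ 2 * q ^ 2) by (apply Rmult_le_compat_r; auto).
    assert (E2 : (6 * K + 12 * T * K ^ 2) * y <= 30 * T * (K + 1) ^ 2 * y) by (apply Rmult_le_compat_r; lra).
    assert (EE : K * (6 * q ^ 2 + 6 * y) + 4 * T * K ^ 2 * (q ^ 2 + 3 * y) + T * (K ^ 2 * (4 * q) ^ 2)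
                 = (6 * K + 20 * T * K ^ 2) * q ^ 2 + (6 * K + 12 * T * K ^ 2) * y) by ring.
    lra.
Qed.

Lemma lim_inv_n (D c : R) : is_lim_seq (fun n => c + D * / INR n) c.
Proof. assert (H : is_lim_seq (fun n => c + D * / INR n) (c + D * 0)).
  { apply is_lim_seq_plus'. apply is_lim_seq_const. apply is_lim_seq_mult'. apply is_lim_seq_const.
    replace (Finite 0) with (Rbar_inv p_infty) by reflexivity. apply is_lim_seq_inv. apply is_lim_seq_INR. discriminate. }
  replace (c + D * 0) with c in H by ring. exact H. Qed.

Lemma real_lim_close (u : nat -> R) c b D : 
  (forall n, (1 <= n)%nat -> Rabs (u n - c) <= b + D * / INR n) -> Rabs (real (Lim_seq u) - c) <= b.
Proof. intros H.
  assert (U : Rbar_le (Lim_seq u) (c + b)).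
  { rewrite <- (is_lim_seq_unique _ _ (lim_inv_n D (c + b))). apply Lim_seq_le_loc. exists 1%nat. intros n Hn.
    specialize (H n Hn). apply Rabs_le_between in H. lra. }
  assert (L : Rbar_le (c - b) (Lim_seq u)).
  { rewrite <- (is_lim_seq_unique _ _ (lim_inv_n (- D) (c - b))). apply Lim_seq_le_loc. exists 1%nat. intros n Hn.
    specialize (H n Hn). apply Rabs_le_between in H. lra. }
  destruct (Lim_seq u) as [r| |]; simpl in U, L |- *; try contradiction. apply Rabs_le; lra. Qed.

Lemma Mp_close k l f a pn Q b D :
  (forall N, (1 <= N)%nat -> Cmod (RtoC (/ INR N ^ l) * box_sum l N (fun n => cprod (seq 0 k) (fun j => floc (f j) pn (Leval l a j n))) - Q)%C
      <= b + D * / INR N) ->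
  Cmod (Mp k l f a pn - Q)%C <= 2 * b.
Proof. intros H. set (G := fun n => cprod (seq 0 k) (fun j => floc (f j) pn (Leval l a j n))) in *.
  set (E := fun N : nat => (RtoC (/ INR N ^ l) * box_sum l N G)%C).
  assert (HM : Mp k l f a pn = (real (Lim_seq (fun N => fst (E N))), real (Lim_seq (fun N => snd (E N))))).
  { unfold Mp, Clim_pinfty, Lim. f_equal; f_equal; apply Lim_seq_ext; intros N; simpl Rbar_loc_seq;
    rewrite Int_part_INR, Nat2Z.id; reflexivity. }
  rewrite HM. eapply Rle_trans. apply Cmod_le_fst_snd.
  set (X1 := real (Lim_seq (fun N => fst (E N)))). set (X2 := real (Lim_seq (fun N => snd (E N)))).
  assert (Ef : fst ((X1, X2) - Q)%C = X1 - fst Q) by (simpl; ring).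
  assert (Es : snd ((X1, X2) - Q)%C = X2 - snd Q) by (simpl; ring).
  rewrite Ef, Es.
  assert (R1 : Rabs (real (Lim_seq (fun N => fst (E N))) - fst Q) <= b).
  { apply real_lim_close with D. intros n Hn. specialize (H n Hn). eapply Rle_trans; [|exact H].
    replace (fst (E n) - fst Q) with (fst (E n - Q)%C) by (simpl; ring). apply fst_le_Cmod. }
  assert (R2 : Rabs (real (Lim_seq (fun N => snd (E N))) - snd Q) <= b).
  { apply real_lim_close with D. intros n Hn. specialize (H n Hn). eapply Rle_trans; [|exact H].
    replace (snd (E n) - snd Q) with (snd (E n - Q)%C) by (simpl; ring). apply snd_le_Cmod. }
  unfold X1, X2. lra. Qed.

Definition flo (y : R) : nat := Z.to_nat (Int_part y).

Lemma flo_spec y : 0 <= y -> INR (flo y) <= y < INR (flo y) + 1.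
Proof. intros Hy. destruct (base_Int_part y) as [A B].
  assert (H0 : (0 <= Int_part y)%Z). { assert (IZR (Int_part y) > -1) by lra. apply lt_IZR in H. lia. }
  unfold flo. rewrite INR_IZR_INZ, Z2Nat.id by auto. lra. Qed.

Lemma inv_sq_tail m M : (1 <= m)%nat ->
  rsum (seq 0 M) (fun p => if Nat.ltb m p then / INR p ^ 2 else 0) <= / INR m - / INR (Nat.max (M - 1) m).
Proof. intros Hm. assert (Hm' : 1 <= INR m) by (apply (le_INR 1) in Hm; simpl in Hm; lra).
  induction M.
  - simpl. replace (Nat.max 0 m) with m by lia. lra.
  - rewrite seq_S, rsum_app, rsum_cons1. simpl Nat.add. destruct (Nat.ltb_spec m M).
    + replace (Nat.max (S M - 1) m) with M by lia. replace (Nat.max (M - 1) m) with (M - 1)%nat in IHM by lia.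
      assert (E : INR (M - 1) = INR M - 1) by (rewrite minus_INR by lia; simpl; lra).
      rewrite E in IHM. assert (HM : INR m + 1 <= INR M) by (rewrite <- S_INR; apply le_INR; lia).
      assert (/ INR M ^ 2 <= / (INR M - 1) - / INR M).
      { replace (/ (INR M - 1) - / INR M) with (/ (INR M * (INR M - 1))) by (field; lra).
        apply Rinv_le_contravar. nra. simpl. nra. }
      lra.
    + replace (Nat.max (S M - 1) m) with m by lia. replace (Nat.max (M - 1) m) with m in IHM by lia. lra.
Qed.

Lemma inv_sq_tail' m M : (1 <= m)%nat ->
  rsum (seq 0 M) (fun p => if Nat.ltb m p then / INR p ^ 2 else 0) <= / INR m.
Proof. intros Hm. eapply Rle_trans. apply inv_sq_tail; auto.
  assert (0 < INR (Nat.max (M - 1) m)) by (apply lt_0_INR; lia).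
  assert (0 < / INR (Nat.max (M - 1) m)) by (apply Rinv_0_lt_compat; auto). lra. Qed.

Lemma count_le m M c : 0 <= c -> rsum (seq 0 M) (fun p => if Nat.leb p m then c else 0) <= INR (S m) * c.
Proof. intros Hc. assert (H : forall M, rsum (seq 0 M) (fun p => if Nat.leb p m then c else 0) = INR (Nat.min M (S m)) * c).
  { induction M0. simpl. lra. rewrite seq_S, rsum_app, rsum_cons1, IHM0. simpl Nat.add.
    destruct (Nat.leb_spec M0 m).
    + replace (Nat.min (S M0) (S m)) with (S (Nat.min M0 (S m))) by lia. rewrite S_INR. lra.
    + replace (Nat.min (S M0) (S m)) with (Nat.min M0 (S m)) by lia. lra. }
  rewrite H. apply Rmult_le_compat_r; auto. apply le_INR. lia. Qed.

Lemma sum_tail_y y M : 2 <= y ->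
  rsum (seq 0 M) (fun p => if Rlt_dec y (INR p) then / INR p ^ 2 else 0) <= 2 / y.
Proof. intros Hy. destruct (flo_spec y ltac:(lra)) as [F1 F2]. set (m := flo y) in *.
  assert (Hm : (1 <= m)%nat). { destruct m. simpl in F2. lra. lia. }
  eapply Rle_trans. apply rsum_le with (G := fun p => if Nat.ltb m p then / INR p ^ 2 else 0).
  { intros p _. destruct (Rlt_dec y (INR p)). destruct (Nat.ltb_spec m p). lra.
    exfalso. apply le_INR in H. lra. destruct (Nat.ltb_spec m p).
    apply Rlt_le, Rinv_0_lt_compat. apply pow_lt. apply lt_0_INR; lia. lra. }
  eapply Rle_trans. apply inv_sq_tail'; auto.
  assert (1 <= INR m) by (apply (le_INR 1) in Hm; simpl in Hm; lra).
  replace (2 / y) with (/ (y / 2)) by (field; lra). apply Rinv_le_contravar; lra. Qed.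

Lemma ln_le_sqrt y : 1 <= y -> ln y <= 2 * sqrt y.
Proof. intros Hy. assert (Hs : 0 < sqrt y) by (apply sqrt_lt_R0; lra).
  rewrite <- (sqrt_sqrt y) at 1 by lra. rewrite ln_mult by auto.
  pose proof (exp_ineq1_le (ln (sqrt y))). rewrite exp_ln in H by auto. lra. Qed.

Lemma ln_pos y : 2 <= y -> 0 < ln y.
Proof. intros Hy. rewrite <- ln_1. apply ln_increasing; lra. Qed.

Definition cc (y : R) (p : nat) : R := if Rle_dec (INR p) (sqrt y) then / y else / INR p ^ 2.

Lemma sum_head_y y M g : 4 <= y -> (forall p, 0 <= g p <= cc y p) -> rsum (seq 0 M) g <= 4 / sqrt y.
Proof. intros Hy Hg. set (s := sqrt y).
  assert (Hs2 : 2 <= s). { unfold s. assert (E4 : 2 = sqrt 4) by (replace 4 with (2*2) by ring; rewrite sqrt_square; lra). rewrite E4. apply sqrt_le_1_alt. lra. }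
  assert (Hss : s * s = y) by (unfold s; apply sqrt_sqrt; lra).
  destruct (flo_spec s ltac:(lra)) as [F1 F2]. set (m := flo s) in *.
  assert (Hm : (1 <= m)%nat). { destruct m. simpl in F2. lra. lia. }
  assert (Hm1 : 1 <= INR m) by (apply (le_INR 1) in Hm; simpl in Hm; lra).
  eapply Rle_trans. apply rsum_le with (G := fun p => (if Nat.leb p m then / y else 0) + (if Nat.ltb m p then / INR p ^ 2 else 0)).
  { intros p _. specialize (Hg p). unfold cc in Hg. fold s in Hg.
    destruct (Rle_dec (INR p) s).
    - assert (p <= m)%nat. { destruct (Nat.le_gt_cases p m); auto.
        assert (INR (S m) <= INR p) by (apply le_INR; lia). rewrite S_INR in H0. lra. }
      destruct (Nat.leb_spec p m); [|lia]. destruct (Nat.ltb_spec m p); [lia|]. lra.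
    - assert (m < p)%nat. { destruct (Nat.lt_ge_cases m p); auto. apply le_INR in H. lra. }
      destruct (Nat.leb_spec p m); [lia|]. destruct (Nat.ltb_spec m p); [|lia]. lra. }
  rewrite rsum_plus.
  assert (Hy0 : 0 < / y) by (apply Rinv_0_lt_compat; lra).
  pose proof (count_le m M (/ y) ltac:(lra)) as C1. pose proof (inv_sq_tail' m M Hm) as C2.
  rewrite S_INR in C1.
  assert (E1 : (INR m + 1) * / y <= 2 / s).
  { replace (2 / s) with ((2 * s) * / y) by (rewrite <- Hss; field; lra). apply Rmult_le_compat_r; lra. }
  assert (E2 : / INR m <= 2 / s).
  { replace (2 / s) with (/ (s / 2)) by (field; lra). apply Rinv_le_contravar; lra. }
  replace (4 / s) with (2 / s + 2 / s) by (field; lra). lra. Qed.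

Definition pp (lo hi : R) (F : nat -> C) (p : nat) : C :=
  if prime_dec (Z.of_nat p) then if Rlt_dec lo (INR p) then if Rle_dec (INR p) hi then F p else RtoC 1 else RtoC 1 else RtoC 1.

Lemma prod_primes_ext lo hi F M : 0 <= hi -> (Z.to_nat (up hi) <= M)%nat ->
  prod_primes lo hi F = cprod (seq 0 M) (pp lo hi F).
Proof. intros Hh HM. unfold prod_primes. fold (pp lo hi F).
  replace M with (Z.to_nat (up hi) + (M - Z.to_nat (up hi)))%nat by lia.
  rewrite seq_app, cprod_app. rewrite (cprod_ext (seq (0 + Z.to_nat (up hi)) _) _ (fun _ => RtoC 1)).
  rewrite cprod_one. ring.
  intros p Hp. apply in_seq in Hp. unfold pp. destruct (prime_dec _); auto. destruct (Rlt_dec _ _); auto.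
  destruct (Rle_dec _ _); auto. exfalso. destruct (archimed hi) as [A _].
  assert (H0 : (0 <= up hi)%Z). { assert (IZR (up hi) > 0) by lra. apply lt_IZR in H. lia. }
  assert (INR (Z.to_nat (up hi)) <= INR p) by (apply le_INR; lia).
  rewrite INR_IZR_INZ, Z2Nat.id in H by auto. lra. Qed.

Lemma pp_prod s lo hi F p : cprod s (fun j => pp lo hi (F j) p) = pp lo hi (fun p => cprod s (fun j => F j p)) p.
Proof. unfold pp. destruct (prime_dec _); [destruct (Rlt_dec _ _); [destruct (Rle_dec _ _)|]|]; auto; apply cprod_one. Qed.

Lemma pp_split y X F p : 0 <= y -> y <= X -> pp 0 X F p = (pp 0 y F p * pp y X F p)%C.
Proof. intros H0 H. unfold pp. pose proof (pos_INR p). destruct (prime_dec _); [|ring].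
  destruct (Rlt_dec 0 (INR p)); destruct (Rle_dec (INR p) X); destruct (Rlt_dec y (INR p));
  destruct (Rle_dec (INR p) y); try ring; exfalso; lra. Qed.

Lemma pp_mul lo hi F G p : pp lo hi (fun p => (F p * G p)%C) p = (pp lo hi F p * pp lo hi G p)%C.
Proof. unfold pp. destruct (prime_dec _); [destruct (Rlt_dec _ _); [destruct (Rle_dec _ _)|]|]; auto; ring. Qed.

Lemma Cmod_one_sub : Cmod (RtoC 1 - 1)%C = 0.
Proof. replace (RtoC 1 - 1)%C with (RtoC 0) by (apply injective_projections; simpl; ring). apply Cmod_0. Qed.

Lemma pp_near lo hi F p c : 0 <= c ->
  (prime (Z.of_nat p) -> lo < INR p -> INR p <= hi -> Cmod (F p - 1)%C <= c) ->
  Cmod (pp lo hi F p - 1)%C <= (if Rlt_dec lo (INR p) then if Rle_dec (INR p) hi then c else 0 else 0).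
Proof. intros Hc H. unfold pp. destruct (prime_dec _); destruct (Rlt_dec lo (INR p)); destruct (Rle_dec (INR p) hi);
  try (rewrite Cmod_one_sub; lra). auto. Qed.

Lemma exists_m0 (pn : nat) (y : R) : (2 <= pn)%nat -> 1 <= y ->
  exists m0, INR (pn ^ m0) <= y < INR (pn ^ S m0).
Proof. intros Hp Hy.
  assert (G : forall n, y < INR (pn ^ n) -> exists m0, INR (pn ^ m0) <= y < INR (pn ^ S m0)).
  { induction n; intros H. simpl in H. lra.
    destruct (Rlt_le_dec y (INR (pn ^ n))). apply IHn; auto. exists n; split; auto. }
  destruct (archimed y) as [A _]. set (z := Z.to_nat (up y)).
  assert (H0 : (0 <= up y)%Z). { assert (IZR (up y) > 0) by lra. apply lt_IZR in H. lia. }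
  apply (G z). assert (INR z = IZR (up y)) by (unfold z; rewrite INR_IZR_INZ, Z2Nat.id; auto).
  assert (Hz : (z <= pn ^ z)%nat). { clear - Hp. induction z. simpl; lia. simpl. 
    assert (1 <= pn ^ z)%nat by (apply Nat.le_succ_l, Nat.neq_0_lt_0, Nat.pow_nonzero; lia). nia. }
  apply le_INR in Hz. lra. Qed.

Lemma csum_zero s : csum s (fun _ => RtoC 0) = RtoC 0.
Proof. induction s; simpl; auto. rewrite IHs. apply injective_projections; simpl; ring. Qed.

Lemma pow_small_le (q : R) n : 0 <= q <= 1 -> q ^ n <= 1.
Proof. intros H. induction n; simpl. lra. nra. Qed.

Lemma Pl_small f pn y : (2 <= pn)%nat -> 1 <= y -> INR pn <= y -> (forall m, Cmod (f (pn ^ S m)%nat) <= 1) ->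
  (forall mu, (1 <= mu)%nat -> INR (pn ^ mu) <= y -> f (pn ^ mu)%nat = RtoC 1) ->
  Cmod (Pl f pn - 1)%C <= 4 * cc y pn.
Proof. intros Hp Hy Hpy Hb H1.
  destruct (exists_m0 pn y Hp Hy) as [m0 [M1 M2]].
  assert (Hm0 : (1 <= m0)%nat). { destruct m0. simpl in M2. rewrite Nat.mul_1_r in M2. lra. lia. }
  pose proof (Pl_bound f pn m0 Hp Hb) as PB.
  rewrite (csum_ext _ _ (fun _ => RtoC 0)) in PB.
  2: { intros m Hm. apply in_seq in Hm. rewrite H1. apply injective_projections; simpl; ring. lia.
       eapply Rle_trans; [|exact M1]. apply le_INR. apply Nat.pow_le_mono_r; lia. }
  rewrite csum_zero in PB. replace (Pl f pn - 1 - RtoC (1 - / INR pn) * RtoC 0)%C with (Pl f pn - 1)%C in PB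
    by (apply injective_projections; simpl; ring).
  eapply Rle_trans. exact PB. apply Rmult_le_compat_l. lra.
  set (q := / INR pn). assert (Hpn : 2 <= INR pn) by (apply (le_INR 2) in Hp; simpl in Hp; lra).
  assert (Hq : 0 < q <= 1/2). { unfold q. split. apply Rinv_0_lt_compat; lra. replace (1/2) with (/2) by lra. apply Rinv_le_contravar; lra. }
  assert (E : q ^ S m0 = / INR (pn ^ S m0)) by (unfold q; rewrite pow_INR, pow_inv; auto).
  unfold cc. destruct (Rle_dec (INR pn) (sqrt y)).
  - rewrite E. apply Rlt_le, Rinv_lt_contravar; [|auto]. apply Rmult_lt_0_compat; lra.
  - replace (S m0) with (2 + (m0 - 1))%nat by lia. rewrite pow_add.
    replace (/ INR pn ^ 2) with (q ^ 2) by (unfold q; rewrite pow_inv; auto).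
    assert (q ^ (m0 - 1) <= 1) by (apply pow_small_le; lra). assert (0 <= q ^ 2) by apply pow2_ge_0. nra.
Qed.

Lemma Q_near k (F : nat -> C) c : (forall j, (j < k)%nat -> Cmod (F j - 1)%C <= c) -> INR k * c <= 1/2 ->
  Cmod (cprod (seq 0 k) F - 1)%C <= 2 * (INR k * c).
Proof. intros H Hk. assert (Hs : rsum (seq 0 k) (fun j => Cmod (F j - 1)%C) <= INR k * c).
  { rewrite <- (length_seq k 0) at 2. rewrite <- rsum_const. apply rsum_le. intros j Hj. apply in_seq in Hj. apply H; lia. }
  eapply Rle_trans. apply cprod_near1_small. lra. lra. Qed.

Lemma Mp_near k l a f pn : primitive_system k l a -> prime (Z.of_nat pn) -> (Amax k l a * Amax k l a < pn)%nat ->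
  (forall j, (j < k)%nat -> one_bounded (f j) /\ multiplicative (f j)) ->
  Cmod (Mp k l f a pn - cprod (seq 0 k) (fun j => Pl (f j) pn))%C <= 2 * (Dk k * (/ INR pn) ^ 2).
Proof. intros. apply Mp_close with (D := Dk k). intros N HN. eapply Rle_trans. apply local_bound; auto. right; ring. Qed.

Lemma Pl_big f pn : (2 <= pn)%nat -> (forall m, Cmod (f (pn ^ S m)%nat) <= 1) -> Cmod (Pl f pn - 1)%C <= 4 * / INR pn.
Proof. intros Hp Hb. pose proof (Pl_bound f pn 0 Hp Hb) as PB. simpl csum in PB.
  replace (Pl f pn - 1 - RtoC (1 - / INR pn) * RtoC 0)%C with (Pl f pn - 1)%C in PB by (apply injective_projections; simpl; ring).
  replace (4 * / INR pn) with (4 * (/ INR pn) ^ 1) by ring. auto. Qed.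

Lemma cc_le y p : 0 < y -> cc y p <= / y.
Proof. intros Hy. unfold cc. destruct (Rle_dec (INR p) (sqrt y)). lra.
  assert (Hs : 0 <= sqrt y) by apply sqrt_pos. assert (Hss : sqrt y * sqrt y = y) by (apply sqrt_sqrt; lra).
  apply Rinv_le_contravar. auto. simpl. nra. Qed.

Lemma cc_nonneg y p : 0 < y -> 0 <= cc y p.
Proof. intros Hy. unfold cc. destruct (Rle_dec (INR p) (sqrt y)).
  apply Rlt_le, Rinv_0_lt_compat; lra.
  assert (Hs : 0 <= sqrt y) by apply sqrt_pos. apply Rlt_le, Rinv_0_lt_compat. apply pow_lt. lra. Qed.

Lemma up_mono y X : y <= X -> (up y <= up X)%Z.
Proof. intros H. destruct (archimed y) as [A1 A2]. destruct (archimed X) as [B1 B2].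
  destruct (Z.le_gt_cases (up y) (up X)); auto. exfalso.
  assert (IZR (up X) <= IZR (up y) - 1). { rewrite <- minus_IZR. apply IZR_le. lia. } lra. Qed.

Theorem lemma2p4 :
  forall k : nat, exists Ck : R, 0 < Ck /\
  forall (l : nat) (a : nat -> nat -> nat), primitive_system k l a ->
  forall eps : R, 0 < eps ->
  exists y0 C0 : R, 0 < C0 /\
  forall y X : R, 2 <= y -> y0 <= y -> y <= X ->
  forall f : nat -> nat -> C,
    (forall j, (j < k)%nat ->
       one_bounded (f j) /\ multiplicative (f j) /\
       (forall p mu, is_prime_nat p -> (1 <= mu)%nat -> INR (p ^ mu) <= y ->
          f j (p ^ mu)%nat = RtoC 1)) ->
  exists th1 th2 : C,
    Cmod th1 <= Ck / ln y /\
    Cmod th2 <= C0 * Rpower y (-1 + eps) /\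
    prod_primes y X (Mp k l f a) =
      Cmult (Cplus (RtoC 1) th1)
            (Cplus (cprod (seq 0 k) (fun j => Pfrak (f j) X)) th2).
Proof.
  intros k. set (D := Dk k).
  assert (HD : 0 <= D) by (unfold D, Dk; pose proof (pow_le 3 k ltac:(lra)); pose proof (pos_INR k); nra).
  assert (Hk : 0 <= INR k) by apply pos_INR.
  exists (64 * D + 256 * INR k + 1). split. lra.
  intros l a Hsys eps Heps.
  set (A2 := INR (Amax k l a * Amax k l a)). assert (HA2 : 0 <= A2) by apply pos_INR.
  exists (16 + 16 * D + A2 + (128 * INR k) ^ 2 + 16 * INR k), 1. split. lra.
  intros y X Hy2 Hy0 HyX f Hf.
  assert (Hk2 : 0 <= (128 * INR k) ^ 2) by apply pow2_ge_0.
  assert (Hy16 : 16 <= y) by lra. assert (HyD : 16 * D <= y) by lra. assert (HyA : A2 <= y) by lra.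
  assert (Hyk : (128 * INR k) ^ 2 <= y) by lra. assert (Hyk2 : 16 * INR k <= y) by lra.
  assert (Hf' : forall j, (j < k)%nat -> one_bounded (f j) /\ multiplicative (f j)) by (intros j Hj; destruct (Hf j Hj) as [A [B _]]; auto).
  assert (Hbp : forall j pn m, (j < k)%nat -> (1 <= pn)%nat -> Cmod (f j (pn ^ S m)%nat) <= 1).
  { intros j pn m Hj Hpn. destruct (Hf j Hj) as [Hb _]. apply Hb. pose proof (Nat.pow_nonzero pn (S m)). lia. }
  set (Q := fun p => cprod (seq 0 k) (fun j => Pl (f j) p)).
  set (MP := Mp k l f a).
  assert (HL : forall p, prime (Z.of_nat p) -> y < INR p ->
            Cmod (Q p - 1)%C <= 1/2 /\ Cmod (MP p / Q p - 1)%C <= 4 * D * / INR p ^ 2).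
  { intros p Hp Hyp. pose proof (prime_ge_2 _ Hp) as Hp2. assert (Hpn : (2 <= p)%nat) by lia.
    assert (HpR : 0 < INR p) by lra.
    assert (HQ : Cmod (Q p - 1)%C <= 2 * (INR k * (4 * / INR p))).
    { apply Q_near. intros j Hj. apply Pl_big; auto. intros m; apply Hbp; auto; lia.
      replace (INR k * (4 * / INR p)) with (4 * INR k / INR p) by (field; lra).
      apply Rmult_le_reg_r with (INR p); auto. unfold Rdiv. rewrite Rmult_assoc, Rinv_l by lra. lra. }
    assert (HQ' : Cmod (Q p - 1)%C <= 1/2).
    { eapply Rle_trans; [exact HQ|]. replace (2 * (INR k * (4 * / INR p))) with (8 * INR k / INR p) by (field; lra).
      apply Rmult_le_reg_r with (INR p); auto. unfold Rdiv. rewrite Rmult_assoc, Rinv_l by lra. lra. }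
    split; auto.
    assert (HQn : 1/2 <= Cmod (Q p)).
    { replace (Q p) with ((Q p - 1) + 1)%C by ring. pose proof (Cmod_triangle (Q p - 1 + 1)%C (- (Q p - 1))%C).
      replace (Q p - 1 + 1 + - (Q p - 1))%C with (RtoC 1) in H by ring. rewrite Cmod_1, Cmod_opp in H. lra. }
    assert (HQ0 : Q p <> RtoC 0). { intros E. rewrite E, Cmod_0 in HQn. lra. }
    assert (HM := Mp_near k l a f p Hsys Hp ltac:(apply INR_lt; fold A2; lra) Hf').
    fold D in HM. fold (Q p) in HM. fold MP in HM.
    replace (MP p / Q p - 1)%C with ((MP p - Q p) / Q p)%C by (field; auto).
    rewrite Cmod_div by auto. apply Rmult_le_reg_r with (Cmod (Q p)). lra.
    unfold Rdiv. rewrite Rmult_assoc, Rinv_l by lra. rewrite Rmult_1_r.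
    replace (/ INR p ^ 2) with ((/ INR p) ^ 2) by (rewrite pow_inv; auto).
    assert (0 <= D * (/ INR p) ^ 2) by (pose proof (pow2_ge_0 (/ INR p)); nra). nra. }
  set (M := Z.to_nat (up X)).
  assert (Hy0' : 0 <= y) by lra.
  set (U := cprod (seq 0 M) (pp y X (fun p => (MP p / Q p)%C))).
  set (A' := cprod (seq 0 M) (pp 0 y Q)).
  set (B := cprod (seq 0 M) (pp y X Q)).
  assert (ELHS : prod_primes y X MP = (B * U)%C).
  { rewrite (prod_primes_ext y X MP M) by (auto; lra).
    unfold B, U. rewrite <- cprod_mul. apply cprod_ext. intros p _. rewrite <- pp_mul.
    unfold pp. destruct (prime_dec _); [destruct (Rlt_dec _ _); [destruct (Rle_dec _ _)|]|]; auto.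
    destruct (HL p p0 r) as [HQ _].
    assert (Q p <> RtoC 0). { intros E. rewrite E in HQ. replace (RtoC 0 - 1)%C with (- RtoC 1)%C in HQ by ring.
      rewrite Cmod_opp, Cmod_1 in HQ. lra. }
    field; auto. }
  assert (ERHS : cprod (seq 0 k) (fun j => Pfrak (f j) X) = (A' * B)%C).
  { unfold Pfrak. rewrite (cprod_ext _ _ (fun j => cprod (seq 0 M) (pp 0 X (Pl (f j))))).
    2: { intros j _. apply prod_primes_ext; auto; lra. }
    rewrite cprod_comm. unfold A', B. rewrite <- cprod_mul. apply cprod_ext. intros p _.
    rewrite pp_prod. fold (Q p). rewrite <- pp_split by auto. unfold pp. reflexivity. }
  assert (SU : rsum (seq 0 M) (fun p => Cmod (pp y X (fun p => (MP p / Q p)%C) p - 1)%C) <= 8 * D / y).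
  { eapply Rle_trans. apply rsum_le with (G := fun p => 4 * D * (if Rlt_dec y (INR p) then / INR p ^ 2 else 0)).
    { intros p _. destruct (Nat.eq_dec p 0) as [->|Hp0].
      { unfold pp. destruct (prime_dec _) as [Hpr|]. exfalso; apply prime_ge_2 in Hpr; simpl in Hpr; lia.
        rewrite Cmod_one_sub. destruct (Rlt_dec y (INR 0)); simpl in *; lra. }
      eapply Rle_trans. apply pp_near with (c := 4 * D * / INR p ^ 2).
      assert (0 < / INR p ^ 2) by (apply Rinv_0_lt_compat, pow_lt, lt_0_INR; lia). nra.
      intros Hp Hyp _. apply (HL p Hp Hyp).
      destruct (Rlt_dec y (INR p)); [destruct (Rle_dec (INR p) X)|]; try lra.
      assert (0 < / INR p ^ 2) by (apply Rinv_0_lt_compat, pow_lt; lra). nra. }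
    rewrite rsum_scal. pose proof (sum_tail_y y M ltac:(lra)).
    replace (8 * D / y) with (4 * D * (2 / y)) by (field; lra). apply Rmult_le_compat_l; lra. }
  assert (HU : Cmod (U - 1)%C <= 16 * D / y).
  { unfold U. eapply Rle_trans. apply cprod_near1_small. eapply Rle_trans; [exact SU|].
    apply Rmult_le_reg_r with y. lra. unfold Rdiv. rewrite Rmult_assoc, Rinv_l by lra. lra.
    replace (16 * D / y) with (2 * (8 * D / y)) by (field; lra). lra. }
  assert (Hsy : 0 < sqrt y) by (apply sqrt_lt_R0; lra).
  assert (Hssy : sqrt y * sqrt y = y) by (apply sqrt_sqrt; lra).
  assert (Hsk : 128 * INR k <= sqrt y).
  { rewrite <- (sqrt_square (128 * INR k)) by lra. apply sqrt_le_1_alt. simpl in Hyk. lra. }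
  assert (SA : rsum (seq 0 M) (fun p => Cmod (pp 0 y Q p - 1)%C) <= 32 * INR k / sqrt y).
  { eapply Rle_trans. apply rsum_le with (G := fun p => 8 * INR k * (if Rlt_dec 0 (INR p) then if Rle_dec (INR p) y then cc y p else 0 else 0)).
    { intros p _. eapply Rle_trans. apply pp_near with (c := 8 * INR k * cc y p).
      pose proof (cc_nonneg y p ltac:(lra)). nra.
      intros Hp _ Hpy. pose proof (prime_ge_2 _ Hp) as Hp2. assert (Hpn : (2 <= p)%nat) by lia.
      replace (8 * INR k * cc y p) with (2 * (INR k * (4 * cc y p))) by ring.
      apply Q_near. intros j Hj. apply Pl_small; auto; try lra. intros m; apply Hbp; auto; lia.
      intros mu Hmu Hmuy. destruct (Hf j Hj) as [_ [_ H3]]. apply H3; auto.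
      pose proof (cc_le y p ltac:(lra)). pose proof (cc_nonneg y p ltac:(lra)).
      assert (INR k * / y <= 1/16). { apply Rmult_le_reg_r with y. lra. rewrite Rmult_assoc, Rinv_l by lra. lra. }
      nra.
      destruct (Rlt_dec 0 (INR p)); [destruct (Rle_dec (INR p) y)|]; lra. }
    rewrite rsum_scal. replace (32 * INR k / sqrt y) with (8 * INR k * (4 / sqrt y)) by (field; lra).
    apply Rmult_le_compat_l. lra. apply sum_head_y. lra. intros p. pose proof (cc_nonneg y p ltac:(lra)).
    destruct (Rlt_dec 0 (INR p)); [destruct (Rle_dec (INR p) y)|]; lra. }
  assert (HA : Cmod (A' - 1)%C <= 64 * INR k / sqrt y).
  { unfold A'. eapply Rle_trans. apply cprod_near1_small. eapply Rle_trans; [exact SA|].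
    apply Rmult_le_reg_r with (sqrt y). lra. unfold Rdiv. rewrite Rmult_assoc, Rinv_l by lra. lra.
    replace (64 * INR k / sqrt y) with (2 * (32 * INR k / sqrt y)) by (field; lra). lra. }
  assert (HA2' : 64 * INR k / sqrt y <= 1) by (apply Rmult_le_reg_r with (sqrt y); [lra|]; unfold Rdiv; rewrite Rmult_assoc, Rinv_l by lra; lra).
  assert (HAn : 1/2 <= Cmod A').
  { pose proof (Cmod_triangle (A' - 1)%C (- (A' - 1))%C). pose proof (Cmod_triangle A' (- (A' - 1))%C).
    replace (A' + - (A' - 1))%C with (RtoC 1) in H0 by ring. rewrite Cmod_1, Cmod_opp in H0.
    assert (64 * INR k / sqrt y <= 1/2).
    { apply Rmult_le_reg_r with (sqrt y). lra. unfold Rdiv. rewrite Rmult_assoc, Rinv_l by lra.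
      assert (1 <= sqrt y). { rewrite <- sqrt_1. apply sqrt_le_1_alt. lra. } nra. }
    lra. }
  assert (HA0 : A' <> RtoC 0). { intros E. rewrite E, Cmod_0 in HAn. lra. }
  exists (U / A' - 1)%C, (RtoC 0). split; [|split].
  - replace (U / A' - 1)%C with ((U - 1 - (A' - 1)) / A')%C by (field; auto).
    rewrite Cmod_div by auto.
    assert (Cmod (U - 1 - (A' - 1))%C <= 16 * D / y + 64 * INR k / sqrt y).
    { eapply Rle_trans. apply Cmod_sub_le. lra. }
    assert (Hyy : 16 * D / y <= 16 * D / sqrt y).
    { unfold Rdiv. apply Rmult_le_compat_l. lra. apply Rinv_le_contravar. lra.
      assert (1 <= sqrt y). { rewrite <- sqrt_1. apply sqrt_le_1_alt. lra. } nra. }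
    assert (Hln : 0 < ln y) by (apply ln_pos; lra). assert (Hls : ln y <= 2 * sqrt y) by (apply ln_le_sqrt; lra).
    apply Rle_trans with (2 * (16 * D / sqrt y + 64 * INR k / sqrt y)).
    { apply Rmult_le_reg_r with (Cmod A'). lra. unfold Rdiv at 1. rewrite Rmult_assoc, Rinv_l by lra. assert (0 <= 64 * INR k / sqrt y) by (apply Rmult_le_pos; [lra | apply Rlt_le, Rinv_0_lt_compat; lra]). assert (0 <= 16 * D / sqrt y) by (apply Rmult_le_pos; [lra | apply Rlt_le, Rinv_0_lt_compat; lra]). nra. }
    replace (2 * (16 * D / sqrt y + 64 * INR k / sqrt y)) with ((32 * D + 128 * INR k) / sqrt y) by (field; lra).
    unfold Rdiv. apply Rle_trans with ((32 * D + 128 * INR k) * (2 * / ln y)).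
    { apply Rmult_le_compat_l. lra. replace (2 * / ln y) with (/ (ln y / 2)) by (field; lra).
      apply Rinv_le_contravar; lra. }
    assert (0 < / ln y) by (apply Rinv_0_lt_compat; lra). nra.
  - rewrite Cmod_0. assert (0 < Rpower y (-1 + eps)) by (unfold Rpower; apply exp_pos). lra.
  - fold MP. rewrite ELHS, ERHS. field. auto.
Qed.
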